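(* Let $d\ge5$ and let $q_1,\ldots,q_d$ be real numbers with $|q_i|\ge e^e$, of which $r\ge1$ are positive and $s\ge1$ negative, $r+s=d$. With $P$, $q_0$, $q$, $|Q|$, $S_j$ as defined below, $$\int_{(8dP)^{-1}q^{-1/2}}^{(8dP)^{-1}q_0^{-1/2}} |S_1(\alpha)\cdots S_d(\alpha)|\,\mathrm{d}\alpha \le C\, q^{1/2}|Q|^{-1/2} P^{d-3}\log P,$$ where $C$ depends only on $d$.
   Context: Notation: $e(x)=\exp(2\pi i x)$; $q_0 = \min_j|q_j|$, $q = \max_j|q_j|$, $|Q| = \prod_{j=1}^d|q_j|$; $S_j(\alpha) = \sum_{m\in\mathbb{Z},\ P < |q_j|^{1/2} m < 2dP} e(\alpha q_j m^2)$. The parameter $P$ is $P = \exp\{(1 + \tfrac{10 d^2}{\log\log H})\log H\}$ with $H = C_d\, q^{\frac12+\beta}$, $C_d\ge1$ a constant depending on $d$, and $\beta$ given, with $r'=\max(r,s)$, $s'=\min(r,s)$, by $\beta = \frac{r'}{2s'}$ if $r'\ge s'+3$, $\beta=\frac{s'+2}{2(s'-1)}$ if $r'\in\{s'+1,s'+2\}$, $\beta = \frac{s'+1}{2(s'-2)}$ if $r'=s'$. *)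

(* Defs.v *)
From Stdlib Require Import Reals Lra Lia List.
From Coquelicot Require Import Coquelicot.
Open Scope R_scope.

(* e(x) = exp(2 pi i x), written as the complex number (cos 2pi x, sin 2pi x). *)
Definition ee (x : R) : C := (cos (2 * PI * x), sin (2 * PI * x)).

(* The coefficients q_1..q_d are represented as q 0, ..., q (d-1). *)
Definition absq (d : nat) (q : nat -> R) : list R := map (fun i => Rabs (q i)) (seq 0 d).

Definition qmax (d : nat) (q : nat -> R) : R := fold_right Rmax 0 (absq d q).
(* q_0 = min_j |q_j| *)
Definition qmin (d : nat) (q : nat -> R) : R := fold_right Rmin (Rabs (q 0%nat)) (absq d q).
Definition Qabs (d : nat) (q : nat -> R) : R := fold_right Rmult 1 (absq d q).

Definition npos (d : nat) (q : nat -> R) : nat :=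
  length (filter (fun i => if Rlt_dec 0 (q i) then true else false) (seq 0 d)).
Definition nneg (d : nat) (q : nat -> R) : nat :=
  length (filter (fun i => if Rlt_dec (q i) 0 then true else false) (seq 0 d)).

Definition beta (r s : nat) : R :=
  let r' := Nat.max r s in
  let s' := Nat.min r s in
  if Nat.leb (s' + 3) r' then INR r' / (2 * INR s')
  else if Nat.leb (s' + 1) r' then (INR s' + 2) / (2 * (INR s' - 1))
  else (INR s' + 1) / (2 * (INR s' - 2)).

Definition Hpar (d : nat) (Cd : R) (q : nat -> R) : R :=
  Cd * Rpower (qmax d q) (/2 + beta (npos d q) (nneg d q)).

Definition Ppar (d : nat) (Cd : R) (q : nat -> R) : R :=
  let H := Hpar d Cd q in
  exp ((1 + 10 * INR d ^ 2 / ln (ln H)) * ln H).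

(* S_j(alpha) = sum over integers m with P < |q_j|^(1/2) m < 2dP of e(alpha q_j m^2).
   Since P > 0, such m are positive and satisfy m < 2dP, so the sum is taken over
   m = 0 .. floor-ish(2dP) with an indicator of the defining condition. *)
Definition Sj (d : nat) (Cd : R) (q : nat -> R) (j : nat) (alpha : R) : C :=
  let P := Ppar d Cd q in
  sum_n (fun m : nat =>
           if Rlt_dec P (sqrt (Rabs (q j)) * INR m) then
             if Rlt_dec (sqrt (Rabs (q j)) * INR m) (2 * INR d * P) then
               ee (alpha * q j * INR m ^ 2)
             else zero
           else zero)
        (Z.to_nat (up (2 * INR d * P))).

Definition absprodS (d : nat) (Cd : R) (q : nat -> R) (alpha : R) : R :=
  fold_right Rmult 1 (map (fun j => Cmod (Sj d Cd q j alpha)) (seq 0 d)).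

(* Main.v *)
Require Import Defs.
From Stdlib Require Import Reals List Lia Lra ZArith Psatz.
From Coquelicot Require Import Coquelicot.
Open Scope R_scope.


Lemma sum_switch (F : nat -> nat -> R) (N M : nat) :
  sum_f_R0 (fun i => sum_f_R0 (fun j => F i j) N) M =
  sum_f_R0 (fun j => sum_f_R0 (fun i => F i j) M) N.
Proof.
  induction M as [|M IH]; simpl.
  - reflexivity.
  - rewrite IH. rewrite <- sum_plus. reflexivity.
Qed.

Lemma sum_scal_l (c : R) (f : nat -> R) (N : nat) :
  c * sum_f_R0 f N = sum_f_R0 (fun i => c * f i) N.
Proof. rewrite scal_sum. apply sum_eq; intros; ring. Qed.

Lemma sum_prod (a b : nat -> R) (M N : nat) :
  sum_f_R0 a M * sum_f_R0 b N =
  sum_f_R0 (fun i => sum_f_R0 (fun j => a i * b j) N) M.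
Proof.
  induction M as [|M IH]; simpl.
  - rewrite scal_sum. apply sum_eq; intros; ring.
  - rewrite <- IH. rewrite Rmult_plus_distr_r. f_equal.
    rewrite scal_sum. apply sum_eq; intros; ring.
Qed.

Lemma sum_nonneg (f : nat -> R) (N : nat) :
  (forall i, (i <= N)%nat -> 0 <= f i) -> 0 <= sum_f_R0 f N.
Proof.
  induction N as [|N IH]; simpl; intros H.
  - apply H; lia.
  - apply Rplus_le_le_0_compat; [apply IH; intros; apply H; lia | apply H; lia].
Qed.

Lemma sum_zero (f : nat -> R) (N : nat) :
  (forall i, (i <= N)%nat -> f i = 0) -> sum_f_R0 f N = 0.
Proof.
  induction N as [|N IH]; simpl; intros H.
  - apply H; lia.
  - rewrite IH, H; [ring|lia|intros; apply H; lia].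
Qed.

Lemma sum_le (f g : nat -> R) (N : nat) :
  (forall i, (i <= N)%nat -> f i <= g i) -> sum_f_R0 f N <= sum_f_R0 g N.
Proof. intros H. apply sum_Rle. auto. Qed.

Lemma term_le_sum (f : nat -> R) (N k : nat) :
  (forall i, (i <= N)%nat -> 0 <= f i) -> (k <= N)%nat -> f k <= sum_f_R0 f N.
Proof.
  induction N as [|N IH]; simpl; intros H Hk.
  - replace k with 0%nat by lia. lra.
  - destruct (Nat.eq_dec k (S N)) as [->|Hne].
    + assert (0 <= sum_f_R0 f N) by (apply sum_nonneg; intros; apply H; lia). lra.
    + assert (f k <= sum_f_R0 f N) by (apply IH; [intros; apply H; lia| lia]).
      assert (0 <= f (S N)) by (apply H; lia). lra.
Qed.

Lemma sum_extend (f : nat -> R) (A B : nat) :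
  (A <= B)%nat -> (forall i, (A < i)%nat -> f i = 0) ->
  sum_f_R0 f B = sum_f_R0 f A.
Proof.
  intros HAB Hz. induction B as [|B IH].
  - replace A with 0%nat by lia. reflexivity.
  - destruct (Nat.eq_dec A (S B)) as [->|Hne]; [reflexivity|].
    simpl. rewrite IH by lia. rewrite Hz by lia. ring.
Qed.

Lemma sum_abs_le (f : nat -> R) (N : nat) :
  Rabs (sum_f_R0 f N) <= sum_f_R0 (fun i => Rabs (f i)) N.
Proof. apply Rsum_abs. Qed.

Lemma count_le (f : nat -> R) (x1 x2 : R) (M : nat) :
  (forall n, 0 <= f n <= 1) ->
  (forall n, f n <> 0 -> x1 <= INR n <= x2) ->
  sum_f_R0 f M <= Rmax 0 (Rmin (INR M) x2 - x1 + 1).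
Proof.
  intros H01 Hsupp. induction M as [|M IH]; [simpl|rewrite tech5].
  - destruct (Req_dec (f 0%nat) 0) as [E|E].
    + rewrite E. apply Rmax_l.
    + destruct (Hsupp _ E) as [h1 h2]. simpl in *.
      rewrite Rmin_left by lra. specialize (H01 0%nat).
      eapply Rle_trans; [|apply Rmax_r]. lra.
  - destruct (Req_dec (f (S M)) 0) as [E|E].
    + rewrite E, Rplus_0_r. eapply Rle_trans; [apply IH|].
      apply Rle_max_compat_l. rewrite ?S_INR.
      assert (Rmin (INR M) x2 <= Rmin (INR M + 1) x2).
      { unfold Rmin. destruct (Rle_dec (INR M) x2), (Rle_dec (INR M + 1) x2); lra. }
      lra.
    + destruct (Hsupp _ E) as [h1 h2]. rewrite S_INR in *.
      assert (INR M <= x2) by lra. rewrite (Rmin_left (INR M)) in IH by lra.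
      rewrite (Rmin_left (INR M + 1)) by lra.
      rewrite Rmax_right in IH by lra. rewrite Rmax_right by lra.
      specialize (H01 (S M)). lra.
Qed.

Lemma count_ge (v : R) (K : nat) :
  Rmin (INR K) (v - 1) <=
  sum_f_R0 (fun j => if Rle_dec 1 (INR j) then if Rle_dec (INR j) v then 1 else 0 else 0) K.
Proof.
  induction K as [|K IH]; [simpl|rewrite tech5].
  - destruct (Rle_dec 1 0); [lra|]. unfold Rmin. destruct (Rle_dec 0 (v-1)); lra.
  - rewrite S_INR in *.
    destruct (Rle_dec 1 (INR K + 1)) as [h|h]; [|pose proof (pos_INR K); lra].
    destruct (Rle_dec (INR K + 1) v) as [h2|h2].
    + unfold Rmin in *. destruct (Rle_dec (INR K) (v-1)), (Rle_dec (INR K + 1) (v-1)); lra.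
    + unfold Rmin in *. destruct (Rle_dec (INR K) (v-1)), (Rle_dec (INR K + 1) (v-1)); lra.
Qed.

Lemma telescope_convex (c : nat -> bool) (G : nat -> R) (M : nat) :
  (forall m n k, (m <= k <= n)%nat -> c m = true -> c n = true -> c k = true) ->
  exists u v, sum_f_R0 (fun n => if c n then G (S n) - G n else 0) M = G u - G v.
Proof.
  intros Hconv.
  assert (forall M, exists u v,
    sum_f_R0 (fun n => if c n then G (S n) - G n else 0) M = G u - G v /\
    (c M = true -> u = S M)) as Hgen.
  { induction M0 as [|M0 IH]; simpl.
    - destruct (c 0%nat) eqn:E.
      + exists 1%nat, 0%nat. split; auto.
      + exists 0%nat, 0%nat. split; [ring| discriminate].
    - destruct IH as [u [v [Heq Hu]]].
      destruct (c (S M0)) eqn:E1.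
      + destruct (c M0) eqn:E0.
        * exists (S (S M0)), v. rewrite Heq, (Hu eq_refl). split; [ring|auto].
        * assert (Hz : sum_f_R0 (fun n => if c n then G (S n) - G n else 0) M0 = 0).
          { apply sum_zero. intros i Hi. destruct (c i) eqn:Ei; [|reflexivity].
            exfalso. assert (c M0 = true) by (apply (Hconv i (S M0) M0); auto; lia).
            congruence. }
          exists (S (S M0)), (S M0). rewrite Hz. split; [ring|auto].
      + exists u, v. rewrite Heq. split; [ring|discriminate]. }
  destruct (Hgen M) as [u [v [H _]]]. eauto.
Qed.


Lemma PI_ge3 : 3 <= PI.
Proof. pose proof PI2_3_2. lra. Qed.

Lemma sin_lb_ge (a : R) : 0 <= a <= 2 -> a / 3 <= sin a.
Proof.
  intros Ha. pose proof PI_ge3.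
  destruct (SIN a) as [HS _]; [lra|lra|].
  eapply Rle_trans; [|exact HS].
  unfold sin_lb, sin_approx, sin_term. simpl.
  set (t := a * a).
  assert (0 <= t <= 4) by (unfold t; nra).
  replace (a * 1) with a by ring.
  assert (Hp : a / 3 <= a * (1 - t / 6 + t * t / 120 - t * t * t / 5040)).
  { assert (1/3 <= 1 - t / 6 + t * t / 120 - t * t * t / 5040) by nra. nra. }
  eapply Rle_trans; [exact Hp|]. unfold t. right. field.
Qed.

Lemma sin_pi_ge (u : R) : Rabs u <= 1/2 -> Rabs u <= Rabs (sin (PI * u)).
Proof.
  intros Hu. pose proof PI_ge3. pose proof PI_4.
  destruct (Rle_dec 0 u) as [Hp|Hn].
  - rewrite (Rabs_right u) in * by lra.
    assert (PI * u / 3 <= sin (PI * u)) by (apply sin_lb_ge; nra).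
    assert (0 <= sin (PI * u)) by nra.
    rewrite Rabs_right by lra. nra.
  - rewrite (Rabs_left u) in * by lra.
    assert (PI * (-u) / 3 <= sin (PI * (-u))) by (apply sin_lb_ge; nra).
    replace (PI * (-u)) with (- (PI * u)) in * by ring.
    rewrite sin_neg in *.
    rewrite Rabs_left1 by nra. nra.
Qed.

Lemma sin_shift_abs (x : R) (k : nat) : Rabs (sin (x - INR k * PI)) = Rabs (sin x).
Proof.
  induction k as [|k IH].
  - simpl. f_equal. f_equal. ring.
  - rewrite S_INR. rewrite <- IH.
    replace (x - INR k * PI) with ((x - (INR k + 1) * PI) + PI) by ring.
    rewrite neg_sin. symmetry. apply Rabs_Ropp.
Qed.

Lemma nearest_nat (x : R) : 0 <= x ->
  exists k : nat, INR k <= x + 1/2 /\ Rabs (x - INR k) <= 1/2.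
Proof.
  intros Hx. destruct (archimed (x - 1/2)) as [H1 H2].
  assert (Hz : (0 <= up (x - 1/2))%Z).
  { assert (-1 < up (x - 1/2))%Z by (apply lt_IZR; simpl; lra). lia. }
  exists (Z.to_nat (up (x - 1/2))).
  rewrite INR_IZR_INZ, Z2Nat.id by exact Hz.
  split; [lra|]. apply Rabs_le; lra.
Qed.

Lemma sin_dist (x : R) : 0 <= x ->
  exists k : nat, INR k <= x + 1/2 /\ Rabs (x - INR k) <= Rabs (sin (PI * x)).
Proof.
  intros Hx. destruct (nearest_nat x Hx) as [k [Hk1 Hk2]].
  exists k. split; [exact Hk1|].
  rewrite <- (sin_shift_abs (PI * x) k).
  replace (PI * x - INR k * PI) with (PI * (x - INR k)) by ring.
  apply sin_pi_ge. exact Hk2.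
Qed.

Lemma ln_y_half (y : R) : 0 < y -> ln y <= 2 * sqrt y.
Proof.
  intros Hy. pose proof (sqrt_lt_R0 y Hy) as Hs.
  assert (ln (sqrt y) <= sqrt y - 1).
  { pose proof (exp_ineq1 (ln (sqrt y))). destruct (Req_dec (ln (sqrt y)) 0) as [E|E].
    - rewrite E. assert (sqrt y = 1). { rewrite <- (exp_ln (sqrt y)) by lra. rewrite E. apply exp_0. } lra.
    - specialize (H E). rewrite exp_ln in H by lra. lra. }
  assert (ln y = 2 * ln (sqrt y)).
  { rewrite <- (sqrt_sqrt y) at 1 by lra. rewrite ln_mult by lra. ring. }
  lra.
Qed.

Lemma ln_ge_1_minus_inv (y : R) : 0 < y -> 1 - / y <= ln y.
Proof.
  intros Hy. destruct (Req_dec (ln (/ y)) 0) as [E|E].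
  - rewrite ln_Rinv in E by lra. assert (ln y = 0) by lra.
    assert (y = 1). { rewrite <- (exp_ln y) by lra. rewrite H. apply exp_0. }
    subst. rewrite Rinv_1. lra.
  - pose proof (exp_ineq1 _ E). rewrite exp_ln in H by (apply Rinv_0_lt_compat; lra).
    rewrite ln_Rinv in H by lra. lra.
Qed.

Lemma inv_le_ln_diff (x : R) : 2 <= x -> / x <= ln x - ln (x - 1).
Proof.
  intros Hx. replace (ln x - ln (x - 1)) with (ln (x / (x - 1))).
  2:{ unfold Rdiv. rewrite ln_mult, ln_Rinv by (try apply Rinv_0_lt_compat; lra). ring. }
  pose proof (ln_ge_1_minus_inv (x / (x - 1))).
  assert (0 < x / (x - 1)) by (apply Rdiv_lt_0_compat; lra).
  specialize (H H0). replace (1 - / (x / (x - 1))) with (/ x) in H by (field; lra). exact H.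
Qed.


Lemma harm_bound (N : nat) : (1 <= N)%nat ->
  sum_f_R0 (fun j => if (1 <=? j)%nat then / INR j else 0) N <= 1 + ln (INR N).
Proof.
  intros HN. induction N as [|N IH]; [lia|].
  destruct (Nat.eq_dec N 0) as [->|HN0].
  - simpl. rewrite ln_1. lra.
  - rewrite tech5. specialize (IH ltac:(lia)).
    replace ((1 <=? S N)%nat) with true by (symmetry; apply Nat.leb_le; lia).
    rewrite S_INR.
    assert (1 <= INR N) by (apply (le_INR 1); lia).
    pose proof (inv_le_ln_diff (INR N + 1) ltac:(lra)).
    replace (INR N + 1 - 1) with (INR N) in H0 by ring. lra.
Qed.

Lemma harm_shift (m M : nat) :
  sum_f_R0 (fun n => if (m <? n)%nat then / (INR n - INR m) else 0) M
  <= 1 + ln (INR M + 1).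
Proof.
  assert (Hg : forall M, sum_f_R0 (fun n => if (m <? n)%nat then / (INR n - INR m) else 0) M
     <= if (m <? M)%nat then 1 + ln (INR M - INR m) else 0).
  { induction M0 as [|M0 IH].
    - simpl. destruct (m <? 0)%nat eqn:E; [apply Nat.ltb_lt in E; lia| lra].
    - rewrite tech5. destruct (m <? S M0)%nat eqn:E1.
      + apply Nat.ltb_lt in E1. destruct (m <? M0)%nat eqn:E0.
        * apply Nat.ltb_lt in E0.
          assert (INR m + 1 <= INR M0) by (rewrite <- S_INR; apply le_INR; lia).
          rewrite S_INR.
          pose proof (inv_le_ln_diff (INR M0 + 1 - INR m) ltac:(lra)).
          replace (INR M0 + 1 - INR m - 1) with (INR M0 - INR m) in H0 by ring. lra.
        * apply Nat.ltb_ge in E0. assert (m = M0) by lia. subst.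
          rewrite S_INR. replace (INR M0 + 1 - INR M0) with 1 by ring.
          rewrite ln_1, Rinv_1. lra.
      + apply Nat.ltb_ge in E1. destruct (m <? M0)%nat eqn:E0; [apply Nat.ltb_lt in E0; lia|]. lra. }
  eapply Rle_trans; [apply Hg|]. destruct (m <? M)%nat eqn:E.
  - apply Nat.ltb_lt in E. assert (INR m + 1 <= INR M) by (rewrite <- S_INR; apply le_INR; lia).
    pose proof (pos_INR m).
    assert (ln (INR M - INR m) <= ln (INR M + 1)) by (apply ln_le; lra). lra.
  - assert (0 <= ln (INR M + 1)). { rewrite <- ln_1. apply ln_le; [lra|]. pose proof (pos_INR M); lra. } lra.
Qed.


Lemma quad_double (w phi : nat -> R) (M : nat) :
  (sum_f_R0 (fun m => w m * cos (phi m)) M) ^ 2 +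
  (sum_f_R0 (fun m => w m * sin (phi m)) M) ^ 2 =
  sum_f_R0 (fun m => sum_f_R0 (fun n => w m * w n * cos (phi m - phi n)) M) M.
Proof.
  rewrite <- !Rsqr_pow2. unfold Rsqr. rewrite !sum_prod. rewrite <- sum_plus.
  apply sum_eq; intros m _. rewrite <- sum_plus. apply sum_eq; intros n _.
  rewrite cos_minus. ring.
Qed.

Lemma sum_single (g : nat -> R) (m M : nat) : (m <= M)%nat ->
  sum_f_R0 (fun n => if (m =? n)%nat then g n else 0) M = g m.
Proof.
  intros Hm. induction M as [|M IH].
  - replace m with 0%nat by lia. reflexivity.
  - rewrite tech5. destruct (Nat.eq_dec m (S M)) as [->|Hne].
    + rewrite Nat.eqb_refl. rewrite sum_zero; [ring|].
      intros i Hi. destruct (S M =? i)%nat eqn:E; [apply Nat.eqb_eq in E; lia|auto].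
    + rewrite IH by lia. destruct (m =? S M)%nat eqn:E; [apply Nat.eqb_eq in E; lia|ring].
Qed.

Lemma double_split (F : nat -> nat -> R) (M : nat) :
  (forall m n, F m n = F n m) ->
  sum_f_R0 (fun m => sum_f_R0 (fun n => F m n) M) M =
  sum_f_R0 (fun n => F n n) M +
  2 * sum_f_R0 (fun n => sum_f_R0 (fun m => if (n <? m)%nat then F m n else 0) M) M.
Proof.
  intros Hs.
  transitivity (sum_f_R0 (fun m => sum_f_R0 (fun n =>
     (if (m =? n)%nat then F m n else 0) + (if (n <? m)%nat then F m n else 0)
      + (if (m <? n)%nat then F m n else 0)) M) M).
  { apply sum_eq; intros m _; apply sum_eq; intros n _.
    destruct (Nat.lt_total m n) as [H|[H|H]].
    - rewrite (proj2 (Nat.eqb_neq m n)) by lia. rewrite (proj2 (Nat.ltb_ge n m)) by lia.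
      rewrite (proj2 (Nat.ltb_lt m n)) by lia. ring.
    - subst. rewrite Nat.eqb_refl, Nat.ltb_irrefl. ring.
    - rewrite (proj2 (Nat.eqb_neq m n)) by lia. rewrite (proj2 (Nat.ltb_lt n m)) by lia.
      rewrite (proj2 (Nat.ltb_ge m n)) by lia. ring. }
  transitivity (sum_f_R0 (fun m => sum_f_R0 (fun n => if (m =? n)%nat then F m n else 0) M) M
    + sum_f_R0 (fun m => sum_f_R0 (fun n => if (n <? m)%nat then F m n else 0) M) M
    + sum_f_R0 (fun m => sum_f_R0 (fun n => if (m <? n)%nat then F m n else 0) M) M).
  { rewrite <- !sum_plus. apply sum_eq; intros m _. rewrite <- !sum_plus. reflexivity. }
  rewrite (sum_eq (fun m => sum_f_R0 (fun n => if (m =? n)%nat then F m n else 0) M) (fun n => F n n))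
    by (intros m Hm; apply (sum_single (fun n => F m n)); lia).
  rewrite (sum_switch (fun m n => if (n <? m)%nat then F m n else 0)).
  rewrite (sum_eq (fun m => sum_f_R0 (fun n => if (m <? n)%nat then F m n else 0) M)
     (fun m => sum_f_R0 (fun n => if (m <? n)%nat then F n m else 0) M))
    by (intros m _; apply sum_eq; intros n _; rewrite Hs; reflexivity).
  ring.
Qed.

Lemma shift_sum (g : nat -> R) (n M : nat) :
  (forall k, (M < k)%nat -> g k = 0) ->
  sum_f_R0 (fun m => if (n <? m)%nat then g m else 0) M =
  sum_f_R0 (fun h => if (1 <=? h)%nat then g (n + h)%nat else 0) M.
Proof.
  intros Hz.
  assert (Hgen : forall K, sum_f_R0 (fun h => if (1 <=? h)%nat then g (n + h)%nat else 0) K =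
                  sum_f_R0 (fun m => if (n <? m)%nat then g m else 0) (n + K)).
  { induction K as [|K IH].
    - simpl. rewrite Nat.add_0_r. symmetry. apply sum_zero. intros i Hi.
      rewrite (proj2 (Nat.ltb_ge n i)) by lia. reflexivity.
    - rewrite tech5, IH. replace (n + S K)%nat with (S (n + K)) by lia. rewrite tech5.
      rewrite (proj2 (Nat.ltb_lt n (S (n+K)))) by lia.
      replace ((1 <=? S K)%nat) with true by (symmetry; apply Nat.leb_le; lia).
      replace (n + S K)%nat with (S (n + K)) by lia. reflexivity. }
  rewrite Hgen. symmetry. apply sum_extend; [lia|]. intros i Hi.
  destruct (n <? i)%nat; [apply Hz; lia| reflexivity].
Qed.


Definition wf (P s D : R) (m : nat) : R :=
  if Rlt_dec P (s * INR m) then if Rlt_dec (s * INR m) (D * P) then 1 else 0 else 0.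

Lemma wf_01 P s D m : 0 <= wf P s D m <= 1.
Proof. unfold wf. destruct Rlt_dec; [destruct Rlt_dec|]; lra. Qed.

Lemma wf_supp P s D m : wf P s D m <> 0 -> P < s * INR m < D * P.
Proof. unfold wf. destruct Rlt_dec; [destruct Rlt_dec|]; intros; try lra; auto. Qed.

Lemma wf_sq P s D m : wf P s D m * wf P s D m = wf P s D m.
Proof. unfold wf. destruct Rlt_dec; [destruct Rlt_dec|]; lra. Qed.

Lemma count_w (P s D : R) (M : nat) : 0 < s -> 1 <= D -> 0 < P ->
  sum_f_R0 (fun n => wf P s D n) M <= (D - 1) * P / s + 1.
Proof.
  intros Hs HD HP.
  eapply Rle_trans; [apply (count_le _ (P / s) (D * P / s))|].
  - apply wf_01.
  - intros n Hn. apply wf_supp in Hn. split.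
    + apply Rlt_le. apply (Rmult_lt_reg_l s); [lra|]. field_simplify; lra.
    + apply Rlt_le. apply (Rmult_lt_reg_l s); [lra|]. field_simplify; lra.
  - assert (0 <= (D - 1) * P / s) by (apply Rmult_le_pos; [nra|left; apply Rinv_0_lt_compat; lra]).
    apply Rmax_lub; [lra|].
    assert (Rmin (INR M) (D * P / s) <= D * P / s) by apply Rmin_r.
    replace ((D - 1) * P / s) with (D * P / s - P / s) by (field; lra). lra.
Qed.

Lemma sum_if (b : bool) (f : nat -> R) (N : nat) :
  sum_f_R0 (fun i => if b then f i else 0) N = if b then sum_f_R0 f N else 0.
Proof. destruct b; [reflexivity|apply sum_zero; auto]. Qed.

Lemma layer_cake (v y : R) (Nn : nat) :
  0 <= v -> 0 <= y -> v <= INR Nn -> v * y <= 1 ->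
  v <= 1 + sum_f_R0 (fun j => if (1 <=? j)%nat then (if Rle_dec (INR j * y) 1 then 1 else 0) else 0) Nn.
Proof.
  intros Hv Hy HvN Hvy. pose proof (count_ge v Nn) as H.
  rewrite Rmin_right in H by lra.
  assert (sum_f_R0 (fun j => if Rle_dec 1 (INR j) then if Rle_dec (INR j) v then 1 else 0 else 0) Nn
          <= sum_f_R0 (fun j => if (1 <=? j)%nat then (if Rle_dec (INR j * y) 1 then 1 else 0) else 0) Nn).
  { apply sum_le. intros j _. destruct (Rle_dec 1 (INR j)) as [h1|h1].
    - assert (1 <= j)%nat by (apply INR_le; simpl; lra).
      replace ((1 <=? j)%nat) with true by (symmetry; apply Nat.leb_le; lia).
      destruct (Rle_dec (INR j) v) as [h2|h2]; [|destruct Rle_dec; lra].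
      destruct (Rle_dec (INR j * y) 1) as [h3|h3]; [lra|]. exfalso. nra.
    - destruct (1 <=? j)%nat; [destruct Rle_dec|]; lra. }
  lra.
Qed.

Lemma dist_count (x y : R) (j K : nat) :
  0 <= x -> x + 1/2 < INR K + 1 -> y = Rabs (sin (PI * x)) -> (1 <= j)%nat ->
  (if Rle_dec (INR j * y) 1 then 1 else 0) <=
  sum_f_R0 (fun k => if Rle_dec (Rabs (x - INR k)) (/ INR j) then 1 else 0) K.
Proof.
  intros Hx HK Hy Hj. destruct (Rle_dec (INR j * y) 1) as [h|h].
  - destruct (sin_dist x Hx) as [k [Hk1 Hk2]].
    assert (Hj' : 1 <= INR j) by (apply (le_INR 1); lia).
    assert (Rabs (x - INR k) <= / INR j).
    { rewrite <- Hy in Hk2. apply (Rmult_le_reg_l (INR j)); [lra|].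
      rewrite Rinv_r by lra. pose proof (Rabs_pos (x - INR k)). nra. }
    assert (k <= K)%nat by (assert (INR k < INR (S K)) by (rewrite S_INR; lra); apply INR_lt in H0; lia).
    eapply Rle_trans; [|apply (term_le_sum (fun k => if Rle_dec (Rabs (x - INR k)) (/ INR j) then 1 else 0) K k)].
    + cbv beta. destruct (Rle_dec (Rabs (x - INR k)) (/ INR j)); lra.
    + intros; destruct Rle_dec; lra.
    + auto.
  - apply sum_nonneg. intros; destruct Rle_dec; lra.
Qed.

Lemma hk_count (theta : R) (j k M : nat) : 0 < theta -> (1 <= j)%nat ->
  sum_f_R0 (fun h => if Rle_dec (Rabs (theta * INR h - INR k)) (/ INR j) then 1 else 0) M
  <= 2 / (INR j * theta) + 1.
Proof.
  intros Ht Hj. assert (Hj' : 1 <= INR j) by (apply (le_INR 1); lia).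
  eapply Rle_trans; [apply (count_le _ ((INR k - / INR j) / theta) ((INR k + / INR j) / theta))|].
  - intros; destruct Rle_dec; lra.
  - intros n Hn. revert Hn. destruct Rle_dec as [h|h]; intros Hn; [|lra]. apply Rabs_le_between in h.
    split.
    + apply (Rmult_le_reg_l theta); [lra|].
      replace (theta * ((INR k - / INR j) / theta)) with (INR k - / INR j) by (field; lra). lra.
    + apply (Rmult_le_reg_l theta); [lra|].
      replace (theta * ((INR k + / INR j) / theta)) with (INR k + / INR j) by (field; lra). lra.
  - assert (0 < / INR j) by (apply Rinv_0_lt_compat; lra).
    assert (Rmin (INR M) ((INR k + / INR j) / theta) <= (INR k + / INR j) / theta) by apply Rmin_r.
    apply Rmax_lub.
    + assert (0 <= 2 / (INR j * theta)) by (apply Rlt_le, Rdiv_lt_0_compat; nra). lra.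
    + replace (2 / (INR j * theta)) with ((INR k + / INR j) / theta - (INR k - / INR j) / theta)
        by (field; lra). lra.
Qed.


Definition Ih (P s D : R) (phi : nat -> R) (Mx h : nat) : R :=
  sum_f_R0 (fun n => wf P s D (n + h) * wf P s D n * cos (phi (n + h)%nat - phi n)) Mx.

Lemma Ih_zero P s D phi Mx h : 0 < s ->
  (D - 1) * P / s <= INR h -> Ih P s D phi Mx h = 0.
Proof.
  intros Hs Hh. unfold Ih. apply sum_zero. intros n _.
  destruct (Req_dec (wf P s D (n + h)) 0) as [E|E]; [rewrite E; ring|].
  destruct (Req_dec (wf P s D n) 0) as [E2|E2]; [rewrite E2; ring|].
  apply wf_supp in E. apply wf_supp in E2. rewrite plus_INR in E.
  exfalso. assert (s * INR h < (D - 1) * P) by lra.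
  assert (INR h < (D - 1) * P / s).
  { apply (Rmult_lt_reg_l s); [lra|]. replace (s * ((D - 1) * P / s)) with ((D-1)*P) by (field; lra). lra. }
  lra.
Qed.

Lemma Ih_abs P s D phi Mx h : 0 < s -> 1 <= D -> 0 < P ->
  Rabs (Ih P s D phi Mx h) <= (D - 1) * P / s + 1.
Proof.
  intros Hs HD HP. unfold Ih. eapply Rle_trans; [apply sum_abs_le|].
  eapply Rle_trans; [|apply (count_w P s D Mx); auto].
  apply sum_le. intros n _. rewrite !Rabs_mult.
  pose proof (wf_01 P s D (n+h)). pose proof (wf_01 P s D n).
  rewrite (Rabs_right (wf P s D (n+h))) by lra. rewrite (Rabs_right (wf P s D n)) by lra.
  pose proof (Rabs_pos (cos (phi (n + h)%nat - phi n))).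
  assert (Rabs (cos (phi (n + h)%nat - phi n)) <= 1) by (apply Rabs_le; apply COS_bound).
  assert (wf P s D (n + h) * Rabs (cos (phi (n + h)%nat - phi n)) <= 1) by (rewrite <- (Rmult_1_l 1); apply Rmult_le_compat; lra).
  replace (wf P s D (n + h) * wf P s D n * Rabs (cos (phi (n + h)%nat - phi n))) with (wf P s D n * (wf P s D (n + h) * Rabs (cos (phi (n + h)%nat - phi n)))) by ring.
  rewrite <- (Rmult_1_r (wf P s D n)) at 2. apply Rmult_le_compat_l; lra.
Qed.

Lemma sin_tel (A B x : R) :
  2 * sin (A / 2) * cos (A * x + B) =
  sin (A * (x + 1) + B - A / 2) - sin (A * x + B - A / 2).
Proof.
  replace (A * (x + 1) + B - A / 2) with ((A * x + B) + A / 2) by field.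
  replace (A * x + B - A / 2) with ((A * x + B) - A / 2) by field.
  rewrite sin_plus, sin_minus. ring.
Qed.

Lemma Ih_sin P s D c alpha Mx h : 0 < s ->
  Rabs (Ih P s D (fun m => 2 * PI * (alpha * c * INR m ^ 2)) Mx h) *
  Rabs (sin (PI * (2 * alpha * Rabs c * INR h))) <= 1.
Proof.
  intros Hs.
  set (cb := fun n => if Rlt_dec P (s * INR n) then
                        if Rlt_dec (s * INR (n + h)) (D * P) then true else false else false).
  set (A := 4 * PI * alpha * c * INR h). set (B := 2 * PI * alpha * c * INR h ^ 2).
  assert (Heq : Ih P s D (fun m => 2 * PI * (alpha * c * INR m ^ 2)) Mx h =
     sum_f_R0 (fun n => if cb n then cos (A * INR n + B) else 0) Mx).
  { unfold Ih. apply sum_eq. intros n _. unfold cb, wf.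
    replace (2 * PI * (alpha * c * INR (n + h) ^ 2) - 2 * PI * (alpha * c * INR n ^ 2))
      with (A * INR n + B) by (unfold A, B; rewrite plus_INR; ring).
    pose proof (pos_INR h). pose proof (pos_INR n). rewrite !plus_INR.
    assert (s * INR n <= s * (INR n + INR h)) by nra.
    destruct (Rlt_dec P (s * INR n)); destruct (Rlt_dec (s * (INR n + INR h)) (D * P));
    destruct (Rlt_dec P (s * (INR n + INR h))); destruct (Rlt_dec (s * INR n) (D * P)); try lra; ring. }
  assert (Hconv : forall m n k, (m <= k <= n)%nat -> cb m = true -> cb n = true -> cb k = true).
  { intros m n k Hk Hm Hn. unfold cb in *.
    assert (INR m <= INR k) by (apply le_INR; lia). assert (INR k <= INR n) by (apply le_INR; lia).
    rewrite !plus_INR in *.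
    destruct (Rlt_dec P (s * INR m)); [|discriminate].
    destruct (Rlt_dec (s * (INR n + INR h)) (D * P)); [|destruct (Rlt_dec P (s * INR n)); discriminate].
    destruct (Rlt_dec P (s * INR k)); [|exfalso; nra]. destruct (Rlt_dec (s * (INR k + INR h)) (D * P)); [reflexivity|exfalso; nra]. }
  destruct (telescope_convex cb (fun n => sin (A * INR n + B - A / 2)) Mx Hconv) as [u [v Huv]].
  assert (Hmul : 2 * sin (A / 2) * sum_f_R0 (fun n => if cb n then cos (A * INR n + B) else 0) Mx
     = sum_f_R0 (fun n => if cb n then sin (A * INR (S n) + B - A / 2) - sin (A * INR n + B - A / 2) else 0) Mx).
  { rewrite sum_scal_l. apply sum_eq. intros n _. destruct (cb n); [|ring].
    rewrite S_INR. apply sin_tel. }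
  rewrite Huv in Hmul.
  assert (Habs : Rabs (2 * sin (A / 2)) * Rabs (sum_f_R0 (fun n => if cb n then cos (A * INR n + B) else 0) Mx) <= 2).
  { rewrite <- Rabs_mult, Hmul. pose proof (SIN_bound (A * INR u + B - A / 2)).
    pose proof (SIN_bound (A * INR v + B - A / 2)). apply Rabs_le. lra. }
  assert (Hsin : Rabs (sin (A / 2)) = Rabs (sin (PI * (2 * alpha * Rabs c * INR h)))).
  { unfold A. destruct (Rle_dec 0 c).
    - rewrite (Rabs_right c) by lra. f_equal. f_equal. field.
    - rewrite (Rabs_left c) by lra.
      replace (4 * PI * alpha * c * INR h / 2) with (- (PI * (2 * alpha * - c * INR h))) by field.
      rewrite sin_neg. apply Rabs_Ropp. }
  rewrite Heq, <- Hsin. rewrite Rabs_mult in Habs. rewrite (Rabs_right 2) in Habs by lra.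
  lra.
Qed.


Lemma wf_zero_big P s D Mx k : 1 <= s -> 0 < P -> D * P < INR Mx -> (Mx < k)%nat -> wf P s D k = 0.
Proof.
  intros Hs HP HM Hk. destruct (Req_dec (wf P s D k) 0) as [E|E]; auto.
  apply wf_supp in E. assert (INR Mx < INR k) by (apply lt_INR; lia).
  exfalso. assert (INR k <= s * INR k) by (pose proof (pos_INR k); nra). lra.
Qed.

Lemma count_ones (N : nat) : sum_f_R0 (fun j => if (1 <=? j)%nat then 1 else 0) N = INR N.
Proof.
  induction N as [|N IH]; [reflexivity|]. rewrite tech5, IH.
  replace ((1 <=? S N)%nat) with true by (symmetry; apply Nat.leb_le; lia). rewrite S_INR. ring.
Qed.

Lemma weyl_main (P s D c alpha : R) (Mx Nn K : nat) :
  1 <= s -> 0 < P -> 1 < D -> 0 < alpha -> c <> 0 -> D * P < INR Mx ->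
  (D - 1) * P / s + 1 <= INR Nn -> (1 <= Nn)%nat ->
  2 * alpha * Rabs c * ((D - 1) * P / s) + 1/2 < INR K + 1 ->
  (sum_f_R0 (fun m => wf P s D m * cos (2 * PI * (alpha * c * INR m ^ 2))) Mx) ^ 2 +
  (sum_f_R0 (fun m => wf P s D m * sin (2 * PI * (alpha * c * INR m ^ 2))) Mx) ^ 2
  <= ((D - 1) * P / s + 1) + 2 * ((D - 1) * P / s + (INR K + 1) *
        (2 * (1 + ln (INR Nn)) / (2 * alpha * Rabs c) + INR Nn)).
Proof.
  intros Hs HP HD Ha Hc HMx HNn HNn1 HK.
  set (L := (D - 1) * P / s) in *. set (th := 2 * alpha * Rabs c) in *.
  assert (HL : 0 <= L) by (unfold L; apply Rmult_le_pos; [nra|left; apply Rinv_0_lt_compat; lra]).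
  assert (Hth : 0 < th) by (unfold th; pose proof (Rabs_pos_lt c Hc); nra).
  set (phi := fun m : nat => 2 * PI * (alpha * c * INR m ^ 2)).
  change (fun m => wf P s D m * cos (2 * PI * (alpha * c * INR m ^ 2))) with (fun m => wf P s D m * cos (phi m)).
  change (fun m => wf P s D m * sin (2 * PI * (alpha * c * INR m ^ 2))) with (fun m => wf P s D m * sin (phi m)).
  rewrite (quad_double (wf P s D) phi Mx).
  rewrite (double_split (fun m n => wf P s D m * wf P s D n * cos (phi m - phi n))).
  2:{ intros m n. replace (phi n - phi m) with (- (phi m - phi n)) by ring. rewrite cos_neg. ring. }
  assert (Hdiag : sum_f_R0 (fun n => wf P s D n * wf P s D n * cos (phi n - phi n)) Mx <= L + 1).
  { rewrite (sum_eq _ (fun n => wf P s D n)).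
    - apply count_w; lra.
    - intros n _. rewrite Rminus_diag, cos_0, wf_sq. ring. }
  assert (Hoff : sum_f_R0 (fun n => sum_f_R0 (fun m => if (n <? m)%nat then wf P s D m * wf P s D n * cos (phi m - phi n) else 0) Mx) Mx
     = sum_f_R0 (fun h => if (1 <=? h)%nat then Ih P s D phi Mx h else 0) Mx).
  { rewrite (sum_eq _ (fun n => sum_f_R0 (fun h => if (1 <=? h)%nat then wf P s D (n + h) * wf P s D n * cos (phi (n + h)%nat - phi n) else 0) Mx)).
    2:{ intros n _. apply (shift_sum (fun m => wf P s D m * wf P s D n * cos (phi m - phi n))).
        intros k Hk. rewrite (wf_zero_big P s D Mx k) by auto. ring. }
    rewrite (sum_switch (fun n h => if (1 <=? h)%nat then wf P s D (n + h) * wf P s D n * cos (phi (n + h)%nat - phi n) else 0)).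
    apply sum_eq. intros h _. rewrite sum_if. reflexivity. }
  rewrite Hoff.
  set (ind := fun h j k : nat => if Rle_dec (Rabs (th * INR h - INR k)) (/ INR j) then 1 else 0).
  assert (Hh : forall h, (h <= Mx)%nat ->
     (if (1 <=? h)%nat then Ih P s D phi Mx h else 0) <=
     (if (1 <=? h)%nat then (if Rlt_dec (INR h) L then 1 else 0) else 0) +
     sum_f_R0 (fun j => if (1 <=? j)%nat then sum_f_R0 (fun k => ind h j k) K else 0) Nn).
  { intros h _.
    assert (Hpos : 0 <= sum_f_R0 (fun j => if (1 <=? j)%nat then sum_f_R0 (fun k => ind h j k) K else 0) Nn).
    { apply sum_nonneg. intros j _. destruct (1 <=? j)%nat; [|lra]. apply sum_nonneg. intros k _.
      unfold ind. destruct Rle_dec; lra. }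
    destruct (1 <=? h)%nat eqn:Eh; [|lra].
    destruct (Rlt_dec (INR h) L) as [HhL|HhL].
    2:{ rewrite Ih_zero; [lra|lra|]. fold L. lra. }
    set (v := Rabs (Ih P s D phi Mx h)). set (y := Rabs (sin (PI * (th * INR h)))).
    assert (Hv1 : v <= INR Nn) by (unfold v; pose proof (Ih_abs P s D phi Mx h ltac:(lra) ltac:(lra) HP); fold L in H; lra).
    assert (Hvy : v * y <= 1) by (unfold v, y, th, phi; apply Ih_sin; lra).
    pose proof (layer_cake v y Nn (Rabs_pos _) (Rabs_pos _) Hv1 Hvy) as HLC.
    assert (Hs2 : sum_f_R0 (fun j => if (1 <=? j)%nat then (if Rle_dec (INR j * y) 1 then 1 else 0) else 0) Nn
        <= sum_f_R0 (fun j => if (1 <=? j)%nat then sum_f_R0 (fun k => ind h j k) K else 0) Nn).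
    { apply sum_le. intros j _. destruct (1 <=? j)%nat eqn:Ej; [|lra].
      apply Nat.leb_le in Ej. apply dist_count; auto.
      - pose proof (pos_INR h); nra.
      - assert (th * INR h <= th * L) by (apply Rmult_le_compat_l; lra). lra. }
    assert (Ih P s D phi Mx h <= v) by apply RRle_abs. lra. }
  assert (Hsum : sum_f_R0 (fun h => if (1 <=? h)%nat then Ih P s D phi Mx h else 0) Mx
     <= L + (INR K + 1) * (2 * (1 + ln (INR Nn)) / th + INR Nn)).
  { eapply Rle_trans; [apply sum_le; exact Hh|]. rewrite sum_plus.
    apply Rplus_le_compat.
    - eapply Rle_trans; [apply (count_le _ 1 L)|].
      + intros n. destruct (1 <=? n)%nat; [destruct Rlt_dec|]; lra.
      + intros n. destruct (1 <=? n)%nat eqn:E; [destruct Rlt_dec|]; intros Hn; try lra.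
        apply Nat.leb_le in E. split; [apply (le_INR 1); lia| lra].
      + apply Rmax_lub; [lra|]. pose proof (Rmin_r (INR Mx) L). lra.
    - rewrite (sum_switch (fun h j => if (1 <=? j)%nat then sum_f_R0 (fun k => ind h j k) K else 0)).
      eapply Rle_trans.
      + apply sum_le. intros j _. rewrite sum_if.
        instantiate (1 := fun j => if (1 <=? j)%nat then (2 / (INR j * th) + 1) * (INR K + 1) else 0).
        cbv beta. destruct (1 <=? j)%nat eqn:Ej; [|lra]. apply Nat.leb_le in Ej.
        rewrite (sum_switch (fun h k => ind h j k)).
        rewrite <- (S_INR K), <- sum_cte. apply sum_le. intros k _. unfold ind. apply hk_count; auto.
      + rewrite (sum_eq _ (fun j => (INR K + 1) * ((2 / th) * (if (1 <=? j)%nat then / INR j else 0)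
                                + (if (1 <=? j)%nat then 1 else 0)))).
        2:{ intros j _. destruct (1 <=? j)%nat eqn:Ej; [|ring]. apply Nat.leb_le in Ej.
            assert (0 < INR j) by (apply lt_0_INR; lia). field; lra. }
        rewrite <- sum_scal_l, sum_plus, <- sum_scal_l.
        assert (0 < INR K + 1) by (pose proof (pos_INR K); lra).
        apply Rmult_le_compat_l; [lra|].
        pose proof (harm_bound Nn HNn1).
        assert (sum_f_R0 (fun j => if (1 <=? j)%nat then 1 else 0) Nn <= INR Nn).
        { rewrite count_ones. lra. }
        assert (0 < 2 / th) by (apply Rdiv_lt_0_compat; lra).
        replace (2 * (1 + ln (INR Nn)) / th) with (2 / th * (1 + ln (INR Nn))) by (field; lra).
        apply Rplus_le_compat; [apply Rmult_le_compat_l; lra|lra]. }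
  lra.
Qed.


Lemma RInt_sum (f : nat -> R -> R) (N : nat) (a b : R) :
  (forall i, ex_RInt (f i) a b) ->
  ex_RInt (fun x => sum_f_R0 (fun i => f i x) N) a b /\
  RInt (fun x => sum_f_R0 (fun i => f i x) N) a b = sum_f_R0 (fun i => RInt (f i) a b) N.
Proof.
  intros Hf. induction N as [|N [IH1 IH2]].
  - simpl. split; [apply (Hf 0%nat)|reflexivity].
  - simpl. split.
    + apply (ex_RInt_plus (fun x => sum_f_R0 (fun i => f i x) N) (f (S N))); auto.
    + rewrite <- IH2. apply (RInt_plus (fun x => sum_f_R0 (fun i => f i x) N) (f (S N))); auto.
Qed.

Lemma ex_RInt_cos (k a b : R) : ex_RInt (fun x => cos (k * x)) a b.
Proof.
  apply (@ex_RInt_continuous R_CompleteNormedModule). intros z _. apply (@ex_derive_continuous R_AbsRing R_NormedModule). auto_derive. auto.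
Qed.

Lemma RInt_cos_bound (k a b : R) : k <> 0 ->
  Rabs (RInt (fun x => cos (k * x)) a b) <= 2 / Rabs k.
Proof.
  intros Hk.
  assert (H : is_RInt (fun x => cos (k * x)) a b (minus (sin (k * b) / k) (sin (k * a) / k))).
  { apply (is_RInt_derive (fun x => sin (k * x) / k)).
    - intros x _. auto_derive; [auto|]. field. auto.
    - intros x _. apply (@ex_derive_continuous R_AbsRing R_NormedModule). auto_derive. auto. }
  rewrite (is_RInt_unique _ _ _ _ H). unfold minus, plus, opp. simpl.
  replace (sin (k * b) / k + - (sin (k * a) / k)) with ((sin (k * b) - sin (k * a)) / k) by (field; auto).
  unfold Rdiv. rewrite Rabs_mult, Rabs_inv. apply Rmult_le_compat_r.
  - left. apply Rinv_0_lt_compat. apply Rabs_pos_lt. auto.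
  - pose proof (SIN_bound (k * b)). pose proof (SIN_bound (k * a)). apply Rabs_le. lra.
Qed.

Lemma RInt_const_R (c a b : R) : RInt (fun _ => c) a b = c * (b - a).
Proof. rewrite RInt_const. unfold scal. simpl. unfold mult. simpl. ring. Qed.


Lemma pair_bound (P s D c a b : R) (m n : nat) :
  1 <= s -> 0 < P -> Rabs c = s * s -> a <= b ->
  wf P s D m * wf P s D n *
    RInt (fun x => cos (2 * PI * c * (INR m ^ 2 - INR n ^ 2) * x)) a b <=
  (if (m =? n)%nat then wf P s D m * (b - a) else 0) +
  wf P s D m * (if (m <? n)%nat then / (INR n - INR m) else 0) / (2 * PI * P * s) +
  wf P s D n * (if (n <? m)%nat then / (INR m - INR n) else 0) / (2 * PI * P * s).
Proof.
  intros Hs HP Hc Hab. pose proof PI_RGT_0 as Hpi.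
  pose proof (wf_01 P s D m) as Wm. pose proof (wf_01 P s D n) as Wn.
  assert (Hq : 0 < 2 * PI * P * s) by (apply Rmult_lt_0_compat; [apply Rmult_lt_0_compat; [apply Rmult_lt_0_compat|]|]; lra).
  assert (Hnn : forall x, 0 <= x -> 0 <= x / (2 * PI * P * s))
    by (intros; apply Rmult_le_pos; [auto|left; apply Rinv_0_lt_compat; lra]).
  assert (Hi1 : 0 <= (if (m <? n)%nat then / (INR n - INR m) else 0)).
  { destruct (m <? n)%nat eqn:E; [|lra]. apply Nat.ltb_lt in E. apply lt_INR in E.
    left; apply Rinv_0_lt_compat; lra. }
  assert (Hi2 : 0 <= (if (n <? m)%nat then / (INR m - INR n) else 0)).
  { destruct (n <? m)%nat eqn:E; [|lra]. apply Nat.ltb_lt in E. apply lt_INR in E.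
    left; apply Rinv_0_lt_compat; lra. }
  assert (Hr1 : 0 <= wf P s D m * (if (m <? n)%nat then / (INR n - INR m) else 0) / (2 * PI * P * s))
    by (apply Hnn; nra).
  assert (Hr2 : 0 <= wf P s D n * (if (n <? m)%nat then / (INR m - INR n) else 0) / (2 * PI * P * s))
    by (apply Hnn; nra).
  destruct (Req_dec (wf P s D m) 0) as [E|Em]; [rewrite E; destruct (m =? n)%nat; nra|].
  destruct (Req_dec (wf P s D n) 0) as [E|En]; [rewrite E; destruct (m =? n)%nat; nra|].
  pose proof (wf_supp _ _ _ _ Em) as Sm. pose proof (wf_supp _ _ _ _ En) as Sn.
  assert (Wm1 : wf P s D m = 1) by (unfold wf in *; repeat destruct Rlt_dec; lra).
  assert (Wn1 : wf P s D n = 1) by (unfold wf in *; repeat destruct Rlt_dec; lra).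
  rewrite Wm1, Wn1. rewrite !Rmult_1_l.
  destruct (Nat.lt_total m n) as [Hlt|[Heq|Hlt]].
  - rewrite (proj2 (Nat.eqb_neq m n)) by lia. rewrite (proj2 (Nat.ltb_lt m n)) by lia.
    rewrite (proj2 (Nat.ltb_ge n m)) by lia.
    apply lt_INR in Hlt.
    set (k := 2 * PI * c * (INR m ^ 2 - INR n ^ 2)).
    assert (Hc0 : c <> 0) by (intro E; rewrite E, Rabs_R0 in Hc; nra).
    assert (Hk : Rabs k = 2 * PI * (s * s) * ((INR n - INR m) * (INR n + INR m))).
    { unfold k. rewrite !Rabs_mult, Hc. rewrite (Rabs_right 2) by lra. rewrite (Rabs_right PI) by lra.
      rewrite Rabs_left by nra. ring. }
    assert (Hk0 : k <> 0).
    { intro E. rewrite E, Rabs_R0 in Hk. pose proof (pos_INR m). assert (0 < s * s) by nra.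
      assert (0 < (INR n - INR m) * (INR n + INR m)) by nra.
      assert (0 < 2 * PI * (s * s) * ((INR n - INR m) * (INR n + INR m))).
      { apply Rmult_lt_0_compat; [apply Rmult_lt_0_compat|]; lra. } lra. }
    eapply Rle_trans; [apply RRle_abs|]. eapply Rle_trans; [apply RInt_cos_bound; auto|].
    rewrite Hk.
    assert (Hsum : 2 * P / s < INR n + INR m).
    { apply (Rmult_lt_reg_l s); [lra|]. replace (s * (2 * P / s)) with (2 * P) by (field; lra). lra. }
    assert (0 < INR n - INR m) by lra.
    assert (0 < 2 * P / s) by (apply Rdiv_lt_0_compat; lra).
    assert (0 < 2 * PI * (s * s) * ((INR n - INR m) * (2 * P / s))).
    { assert (0 < (INR n - INR m) * (2 * P / s)) by nra.
      apply Rmult_lt_0_compat; [apply Rmult_lt_0_compat; [|nra]|]; lra. }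
    apply Rle_trans with (2 / (2 * PI * (s * s) * ((INR n - INR m) * (2 * P / s)))).
    { unfold Rdiv. apply Rmult_le_compat_l; [lra|]. apply Rinv_le_contravar; [auto|].
      apply Rmult_le_compat_l; [nra|]. apply Rmult_le_compat_l; lra. }
    right. field. repeat split; lra.
  - subst. rewrite Nat.eqb_refl, Nat.ltb_irrefl.
    rewrite (RInt_ext _ (fun _ => 1)). 2:{ intros x _. replace (2 * PI * c * (INR n ^ 2 - INR n ^ 2) * x) with 0 by ring. apply cos_0. }
    rewrite RInt_const_R. lra.
  - rewrite (proj2 (Nat.eqb_neq m n)) by lia. rewrite (proj2 (Nat.ltb_lt n m)) by lia.
    rewrite (proj2 (Nat.ltb_ge m n)) by lia.
    apply lt_INR in Hlt.
    set (k := 2 * PI * c * (INR m ^ 2 - INR n ^ 2)).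
    assert (Hc0 : c <> 0) by (intro E; rewrite E, Rabs_R0 in Hc; nra).
    assert (Hk : Rabs k = 2 * PI * (s * s) * ((INR m - INR n) * (INR m + INR n))).
    { unfold k. rewrite !Rabs_mult, Hc. rewrite (Rabs_right 2) by lra. rewrite (Rabs_right PI) by lra.
      pose proof (pos_INR n); rewrite Rabs_right by nra. ring. }
    assert (Hk0 : k <> 0).
    { intro E. rewrite E, Rabs_R0 in Hk. pose proof (pos_INR n). assert (0 < s * s) by nra.
      assert (0 < (INR m - INR n) * (INR m + INR n)) by nra.
      assert (0 < 2 * PI * (s * s) * ((INR m - INR n) * (INR m + INR n))).
      { apply Rmult_lt_0_compat; [apply Rmult_lt_0_compat|]; lra. } lra. }
    eapply Rle_trans; [apply RRle_abs|]. eapply Rle_trans; [apply RInt_cos_bound; auto|].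
    rewrite Hk.
    assert (Hsum : 2 * P / s < INR m + INR n).
    { apply (Rmult_lt_reg_l s); [lra|]. replace (s * (2 * P / s)) with (2 * P) by (field; lra). lra. }
    assert (0 < INR m - INR n) by lra.
    assert (0 < 2 * P / s) by (apply Rdiv_lt_0_compat; lra).
    assert (0 < 2 * PI * (s * s) * ((INR m - INR n) * (2 * P / s))).
    { assert (0 < (INR m - INR n) * (2 * P / s)) by nra.
      apply Rmult_lt_0_compat; [apply Rmult_lt_0_compat; [|nra]|]; lra. }
    apply Rle_trans with (2 / (2 * PI * (s * s) * ((INR m - INR n) * (2 * P / s)))).
    { unfold Rdiv. apply Rmult_le_compat_l; [lra|]. apply Rinv_le_contravar; [auto|].
      apply Rmult_le_compat_l; [nra|]. apply Rmult_le_compat_l; lra. }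
    right. field. repeat split; lra.
Qed.


Lemma RInt_scal_R (f : R -> R) (a b k : R) : ex_RInt f a b ->
  RInt (fun x => k * f x) a b = k * RInt f a b.
Proof. intros H. exact (RInt_scal f a b k H). Qed.

Lemma ex_RInt_kcos (k kap a b : R) : ex_RInt (fun x => k * cos (kap * x)) a b.
Proof.
  apply (@ex_RInt_continuous R_CompleteNormedModule). intros z _.
  apply (@ex_derive_continuous R_AbsRing R_NormedModule). auto_derive. auto.
Qed.

Definition Zf (P s D c : R) (Mx : nat) (x : R) : R :=
  (sum_f_R0 (fun m => wf P s D m * cos (2 * PI * (x * c * INR m ^ 2))) Mx) ^ 2 +
  (sum_f_R0 (fun m => wf P s D m * sin (2 * PI * (x * c * INR m ^ 2))) Mx) ^ 2.

Lemma Zf_eq P s D c Mx x : Zf P s D c Mx x =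
  sum_f_R0 (fun m => sum_f_R0 (fun n => wf P s D m * wf P s D n *
     cos (2 * PI * c * (INR m ^ 2 - INR n ^ 2) * x)) Mx) Mx.
Proof.
  unfold Zf. rewrite (quad_double (wf P s D) (fun m => 2 * PI * (x * c * INR m ^ 2)) Mx).
  apply sum_eq; intros m _; apply sum_eq; intros n _. f_equal. f_equal. ring.
Qed.

Lemma l2_main (P s D c a b : R) (Mx : nat) :
  1 <= s -> 0 < P -> 1 < D -> Rabs c = s * s -> a <= b ->
  ex_RInt (Zf P s D c Mx) a b /\
  RInt (Zf P s D c Mx) a b <= ((D - 1) * P / s + 1) * (b - a) +
     ((D - 1) * P / s + 1) * (1 + ln (INR Mx + 1)) / (PI * P * s).
Proof.
  intros Hs HP HD Hc Hab. pose proof PI_RGT_0 as Hpi.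
  set (g := fun m n x => wf P s D m * wf P s D n * cos (2 * PI * c * (INR m ^ 2 - INR n ^ 2) * x)).
  assert (Hg : forall m n, ex_RInt (g m n) a b) by (intros; apply ex_RInt_kcos).
  assert (Hin : forall m, ex_RInt (fun x => sum_f_R0 (fun n => g m n x) Mx) a b /\
     RInt (fun x => sum_f_R0 (fun n => g m n x) Mx) a b = sum_f_R0 (fun n => RInt (g m n) a b) Mx)
    by (intros m; apply (RInt_sum (g m)); auto).
  destruct (RInt_sum (fun m x => sum_f_R0 (fun n => g m n x) Mx) Mx a b (fun m => proj1 (Hin m))) as [Hex Hr].
  assert (HZ : forall x, Zf P s D c Mx x = sum_f_R0 (fun m => sum_f_R0 (fun n => g m n x) Mx) Mx)
    by (intros; apply Zf_eq).
  split.
  { eapply ex_RInt_ext; [|exact Hex]. intros x _. symmetry. apply HZ. }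
  rewrite (RInt_ext _ (fun x => sum_f_R0 (fun m => sum_f_R0 (fun n => g m n x) Mx) Mx))
    by (intros; apply HZ).
  rewrite Hr.
  rewrite (sum_eq _ (fun m => sum_f_R0 (fun n => RInt (g m n) a b) Mx)) by (intros m _; apply (proj2 (Hin m))).
  eapply Rle_trans.
  { apply sum_le; intros m _; apply sum_le; intros n _.
    unfold g. rewrite (RInt_scal_R (fun x => cos (2 * PI * c * (INR m ^ 2 - INR n ^ 2) * x)) a b (wf P s D m * wf P s D n))
      by apply ex_RInt_cos.
    apply (pair_bound P s D c a b m n); auto. }
  rewrite (sum_eq _ (fun m => sum_f_R0 (fun n => if (m =? n)%nat then wf P s D m * (b - a) else 0) Mx
     + sum_f_R0 (fun n => wf P s D m * (if (m <? n)%nat then / (INR n - INR m) else 0) / (2 * PI * P * s)) Mx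
     + sum_f_R0 (fun n => wf P s D n * (if (n <? m)%nat then / (INR m - INR n) else 0) / (2 * PI * P * s)) Mx))
    by (intros m _; rewrite <- !sum_plus; reflexivity).
  set (K := 2 * PI * P * s).
  assert (HK : 0 < K) by (unfold K; apply Rmult_lt_0_compat; [apply Rmult_lt_0_compat; [|lra]|]; lra).
  rewrite !sum_plus.
  rewrite (sum_switch (fun m n => wf P s D n * (if (n <? m)%nat then / (INR m - INR n) else 0) / K)).
  set (L := (D - 1) * P / s).
  assert (HW : sum_f_R0 (fun m => wf P s D m) Mx <= L + 1) by (apply count_w; lra).
  assert (T1 : sum_f_R0 (fun m => sum_f_R0 (fun n => if (m =? n)%nat then wf P s D m * (b - a) else 0) Mx) Mx
     <= (L + 1) * (b - a)).
  { rewrite (sum_eq _ (fun m => (b - a) * wf P s D m))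
      by (intros m Hm; rewrite (sum_single (fun n => wf P s D m * (b - a))) by auto; ring).
    rewrite <- sum_scal_l. rewrite (Rmult_comm (L + 1)).
    apply Rmult_le_compat_l; [lra|exact HW]. }
  assert (T2 : sum_f_R0 (fun m => sum_f_R0 (fun n => wf P s D m * (if (m <? n)%nat then / (INR n - INR m) else 0) / K) Mx) Mx
     <= (L + 1) * (1 + ln (INR Mx + 1)) / K).
  { eapply Rle_trans.
    { apply sum_le; intros m _.
      rewrite (sum_eq _ (fun n => (wf P s D m / K) * (if (m <? n)%nat then / (INR n - INR m) else 0)))
        by (intros; unfold Rdiv; ring).
      rewrite <- sum_scal_l. apply Rmult_le_compat_l.
      - apply Rmult_le_pos; [apply wf_01|left; apply Rinv_0_lt_compat; lra].
      - apply harm_shift. }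
    rewrite (sum_eq _ (fun m => (1 + ln (INR Mx + 1)) / K * wf P s D m)) by (intros; unfold Rdiv; ring).
    rewrite <- sum_scal_l.
    assert (0 <= 1 + ln (INR Mx + 1)).
    { assert (0 <= ln (INR Mx + 1)) by (rewrite <- ln_1; apply ln_le; [lra|pose proof (pos_INR Mx); lra]). lra. }
    assert (0 <= (1 + ln (INR Mx + 1)) / K) by (apply Rmult_le_pos; [lra|left; apply Rinv_0_lt_compat; lra]).
    replace ((L + 1) * (1 + ln (INR Mx + 1)) / K) with ((1 + ln (INR Mx + 1)) / K * (L + 1)) by (field; lra).
    apply Rmult_le_compat_l; [lra|exact HW]. }
  replace ((L + 1) * (1 + ln (INR Mx + 1)) / (PI * P * s)) with (2 * ((L + 1) * (1 + ln (INR Mx + 1)) / K))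
    by (unfold K; field; repeat split; lra).
  lra.
Qed.


Fixpoint prodn (t : nat -> R) (n : nat) : R :=
  match n with O => 1 | S k => prodn t k * t k end.

Lemma fold_prodn (t : nat -> R) (n : nat) :
  fold_right Rmult 1 (map t (seq 0 n)) = prodn t n.
Proof.
  induction n as [|n IH]; [reflexivity|].
  rewrite seq_S, map_app, fold_right_app. simpl. rewrite <- IH.
  generalize (map t (seq 0 n)). intros l. induction l as [|x l IHl]; simpl; [ring|].
  rewrite IHl. ring.
Qed.

Lemma prodn_mult (f g : nat -> R) (n : nat) :
  prodn (fun j => f j * g j) n = prodn f n * prodn g n.
Proof. induction n as [|n IH]; simpl; [ring|]. rewrite IH. ring. Qed.

Lemma prodn_nonneg (t : nat -> R) (n : nat) : (forall j, (j < n)%nat -> 0 <= t j) -> 0 <= prodn t n.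
Proof.
  induction n as [|n IH]; simpl; intros H; [lra|].
  apply Rmult_le_pos; [apply IH; intros; apply H; lia|apply H; lia].
Qed.

Lemma prodn_pos (t : nat -> R) (n : nat) : (forall j, (j < n)%nat -> 0 < t j) -> 0 < prodn t n.
Proof.
  induction n as [|n IH]; simpl; intros H; [lra|].
  apply Rmult_lt_0_compat; [apply IH; intros; apply H; lia|apply H; lia].
Qed.

Lemma prodn_sqrt (t : nat -> R) (n : nat) : (forall j, (j < n)%nat -> 0 <= t j) ->
  sqrt (prodn t n) = prodn (fun j => sqrt (t j)) n.
Proof.
  induction n as [|n IH]; simpl; intros H; [apply sqrt_1|].
  rewrite sqrt_mult; [rewrite IH; auto|apply prodn_nonneg; intros; apply H; lia|apply H; lia].
Qed.

Lemma prodn_two (t : nat -> R) (V : R) (a b d : nat) :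
  (a < d)%nat -> (b < d)%nat -> a <> b -> 0 < V ->
  (forall j, (j < d)%nat -> 0 <= t j) ->
  (forall j, (j < d)%nat -> j <> a -> j <> b -> t j <= V) ->
  prodn t d <= V ^ (d - 2) * t a * t b.
Proof.
  intros Ha Hb Hab HV Ht HtV.
  assert (Hgen : forall n, (n <= d)%nat ->
     prodn t n * (if (a <? n)%nat then V else 1) * (if (b <? n)%nat then V else 1) <=
     (if (a <? n)%nat then t a else 1) * (if (b <? n)%nat then t b else 1) * V ^ n).
  { induction n as [|n IH]; intros Hn.
    - simpl. lra.
    - specialize (IH ltac:(lia)). simpl prodn. simpl pow.
      assert (0 <= prodn t n) by (apply prodn_nonneg; intros; apply Ht; lia).
      assert (0 <= t n) by (apply Ht; lia).
      assert (0 <= t a) by (apply Ht; lia). assert (0 <= t b) by (apply Ht; lia).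
      destruct (Nat.eq_dec n a) as [->|Hna].
      + rewrite (proj2 (Nat.ltb_lt a (S a))) by lia. rewrite (proj2 (Nat.ltb_ge a a)) in IH by lia.
        replace ((b <? S a)%nat) with ((b <? a)%nat)
          by (destruct (b <? S a)%nat eqn:E1, (b <? a)%nat eqn:E2; auto;
              [apply Nat.ltb_lt in E1; apply Nat.ltb_ge in E2 | apply Nat.ltb_ge in E1; apply Nat.ltb_lt in E2]; lia).
        destruct (b <? a)%nat.
        * replace (prodn t a * t a * V * V) with (t a * V * (prodn t a * 1 * V)) by ring.
          replace (t a * t b * (V * V ^ a)) with (t a * V * (1 * t b * V ^ a)) by ring.
          apply Rmult_le_compat_l; [nra|lra].
        * replace (prodn t a * t a * V * 1) with (t a * V * (prodn t a * 1 * 1)) by ring.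
          replace (t a * 1 * (V * V ^ a)) with (t a * V * (1 * 1 * V ^ a)) by ring.
          apply Rmult_le_compat_l; [nra|lra].
      + destruct (Nat.eq_dec n b) as [->|Hnb].
        * rewrite (proj2 (Nat.ltb_lt b (S b))) by lia. rewrite (proj2 (Nat.ltb_ge b b)) in IH by lia.
          replace ((a <? S b)%nat) with ((a <? b)%nat)
            by (destruct (a <? S b)%nat eqn:E1, (a <? b)%nat eqn:E2; auto;
                [apply Nat.ltb_lt in E1; apply Nat.ltb_ge in E2 | apply Nat.ltb_ge in E1; apply Nat.ltb_lt in E2]; lia).
          destruct (a <? b)%nat.
          -- replace (prodn t b * t b * V * V) with (t b * V * (prodn t b * V * 1)) by ring.
             replace (t a * t b * (V * V ^ b)) with (t b * V * (t a * 1 * V ^ b)) by ring.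
             apply Rmult_le_compat_l; [nra|lra].
          -- replace (prodn t b * t b * 1 * V) with (t b * V * (prodn t b * 1 * 1)) by ring.
             replace (1 * t b * (V * V ^ b)) with (t b * V * (1 * 1 * V ^ b)) by ring.
             apply Rmult_le_compat_l; [nra|lra].
        * replace ((a <? S n)%nat) with ((a <? n)%nat)
            by (destruct (a <? S n)%nat eqn:E1, (a <? n)%nat eqn:E2; auto;
                [apply Nat.ltb_lt in E1; apply Nat.ltb_ge in E2 | apply Nat.ltb_ge in E1; apply Nat.ltb_lt in E2]; lia).
          replace ((b <? S n)%nat) with ((b <? n)%nat)
            by (destruct (b <? S n)%nat eqn:E1, (b <? n)%nat eqn:E2; auto;
                [apply Nat.ltb_lt in E1; apply Nat.ltb_ge in E2 | apply Nat.ltb_ge in E1; apply Nat.ltb_lt in E2]; lia).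
          assert (t n <= V) by (apply HtV; lia).
          set (A1 := if (a <? n)%nat then V else 1) in *. set (B1 := if (b <? n)%nat then V else 1) in *.
          assert (0 <= A1) by (unfold A1; destruct (a <? n)%nat; lra).
          assert (0 <= B1) by (unfold B1; destruct (b <? n)%nat; lra).
          replace (prodn t n * t n * A1 * B1) with (t n * (prodn t n * A1 * B1)) by ring.
          set (RHS := (if (a <? n)%nat then t a else 1) * (if (b <? n)%nat then t b else 1) * V ^ n) in *.
          replace ((if (a <? n)%nat then t a else 1) * (if (b <? n)%nat then t b else 1) * (V * V ^ n)) with (V * RHS)
            by (unfold RHS; ring).
          assert (0 <= prodn t n * A1 * B1) by (apply Rmult_le_pos; [apply Rmult_le_pos|]; lra).
          apply Rmult_le_compat; lra. }
  specialize (Hgen d (le_n d)).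
  rewrite (proj2 (Nat.ltb_lt a d)), (proj2 (Nat.ltb_lt b d)) in Hgen by lia.
  replace (V ^ d) with (V ^ (d - 2) * (V * V)) in Hgen.
  2:{ replace (V ^ d) with (V ^ (d - 2 + 2)) by (f_equal; lia). rewrite pow_add. simpl. ring. }
  assert (0 < V * V) by nra.
  apply (Rmult_le_reg_r (V * V)); [lra|]. 
  replace (prodn t d * (V * V)) with (prodn t d * V * V) by ring.
  replace (V ^ (d - 2) * t a * t b * (V * V)) with (t a * t b * (V ^ (d - 2) * (V * V))) by ring.
  exact Hgen.
Qed.

Lemma fold_min_in (x0 : R) (l : list R) :
  fold_right Rmin x0 l = x0 \/ In (fold_right Rmin x0 l) l.
Proof.
  induction l as [|x l IH]; [simpl; auto|]. cbn [fold_right].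
  destruct (Rle_dec x (fold_right Rmin x0 l)) as [h|h].
  - rewrite Rmin_left by auto. right. simpl. left. auto.
  - rewrite Rmin_right by lra. destruct IH as [IH|IH]; [left; auto|right; simpl; right; auto].
Qed.

Lemma fold_min_le (x0 : R) (l : list R) (y : R) : In y l -> fold_right Rmin x0 l <= y.
Proof.
  induction l as [|x l IH]; simpl; [tauto|]. intros [->|H].
  - apply Rmin_l.
  - eapply Rle_trans; [apply Rmin_r|auto].
Qed.

Lemma fold_max_ge (l : list R) (y : R) : In y l -> y <= fold_right Rmax 0 l.
Proof.
  induction l as [|x l IH]; simpl; [tauto|]. intros [->|H].
  - apply Rmax_l.
  - eapply Rle_trans; [auto|apply Rmax_r].
Qed.


Lemma beta_ineq (r s d : nat) : (1 <= r)%nat -> (1 <= s)%nat -> (r + s = d)%nat -> (5 <= d)%nat ->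
  INR d - 5/2 <= (INR d - 4) * (/2 + beta r s).
Proof.
  intros Hr Hs Hd H5. unfold beta. cbv zeta.
  set (r' := Nat.max r s). set (s' := Nat.min r s).
  assert (Hsum : (r' + s' = d)%nat) by (unfold r', s'; lia).
  assert (Hle : (s' <= r')%nat) by (unfold r', s'; lia).
  assert (Hs1 : (1 <= s')%nat) by (unfold s'; lia).
  assert (ED : INR d = INR r' + INR s') by (rewrite <- plus_INR; f_equal; lia).
  assert (H5' : 5 <= INR d) by (replace 5 with (INR 5) by (simpl; lra); apply le_INR; lia).
  destruct (Nat.leb (s' + 3) r') eqn:E1.
  - apply Nat.leb_le in E1.
    assert (HS : 1 <= INR s') by (apply (le_INR 1); lia).
    assert (HR : INR s' + 3 <= INR r') by (replace 3 with (INR 3) by (simpl; lra); rewrite <- plus_INR; apply le_INR; lia).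
    replace ((INR d - 4) * (/ 2 + INR r' / (2 * INR s'))) with ((INR d - 4) * INR d / (2 * INR s')) by (rewrite ED; field; lra).
    apply (Rmult_le_reg_r (2 * INR s')); [lra|].
    replace ((INR d - 4) * INR d / (2 * INR s') * (2 * INR s')) with ((INR d - 4) * INR d) by (field; lra).
    nra.
  - apply Nat.leb_gt in E1. destruct (Nat.leb (s' + 1) r') eqn:E2.
    + apply Nat.leb_le in E2.
      assert (HS : 2 <= INR s') by (replace 2 with (INR 2) by (simpl; lra); apply le_INR; lia).
      assert (HD1 : 2 * INR s' + 1 <= INR d) by (rewrite ED; assert (INR s' + 1 <= INR r') by (rewrite <- S_INR; apply le_INR; lia); lra).
      assert (HD2 : INR d <= 2 * INR s' + 2) by (rewrite ED; assert (INR r' <= INR s' + 2) by (replace 2 with (INR 2) by (simpl; lra); rewrite <- plus_INR; apply le_INR; lia); lra).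
      replace ((INR d - 4) * (/ 2 + (INR s' + 2) / (2 * (INR s' - 1)))) with ((INR d - 4) * (2 * INR s' + 1) / (2 * (INR s' - 1))) by (field; lra).
      apply (Rmult_le_reg_r (2 * (INR s' - 1))); [lra|].
      replace ((INR d - 4) * (2 * INR s' + 1) / (2 * (INR s' - 1)) * (2 * (INR s' - 1))) with ((INR d - 4) * (2 * INR s' + 1)) by (field; lra).
      nra.
    + apply Nat.leb_gt in E2. assert (r' = s') by lia.
      assert (HS : 3 <= INR s') by (replace 3 with (INR 3) by (simpl; lra); apply le_INR; lia).
      assert (INR d = 2 * INR s') by (rewrite ED; rewrite H; ring).
      replace ((INR d - 4) * (/ 2 + (INR s' + 1) / (2 * (INR s' - 2)))) with (2 * INR s' - 1) by (rewrite H0; field; lra).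
      lra.
Qed.


Lemma exp_le' (x y : R) : x <= y -> exp x <= exp y.
Proof. intros H. destruct (Rle_lt_or_eq_dec x y H) as [h|h]; [left; apply exp_increasing; auto|subst; lra]. Qed.

Lemma ln_le_inv' (x y : R) : 0 < x -> 0 < y -> ln x <= ln y -> x <= y.
Proof.
  intros Hx Hy H. rewrite <- (exp_ln x), <- (exp_ln y) by auto. apply exp_le'. auto.
Qed.

Lemma boost (d : nat) (Cd qM b : R) : (5 <= d)%nat -> 1 <= Cd -> exp (exp 1) <= qM ->
  INR d - 5/2 <= (INR d - 4) * (/2 + b) ->
  let H := Cd * Rpower qM (/2 + b) in
  let P := exp ((1 + 10 * INR d ^ 2 / ln (ln H)) * ln H) in
  qM ^ (2 * d - 5) * (ln P) ^ (2 * (d - 2)) <= (1 + 10 * INR d ^ 2) ^ (2 * (d - 2)) * P ^ (2 * (d - 4))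
  /\ qM <= P /\ 1 <= ln P.
Proof.
  intros H5 HCd HqM Hb H P.
  set (D := INR d) in *.
  assert (HD : 5 <= D) by (unfold D; replace 5 with (INR 5) by (simpl; lra); apply le_INR; lia).
  set (b' := /2 + b) in *.
  assert (Hb' : 1 <= b').
  { destruct (Rle_dec 1 b') as [h|h]; auto. exfalso.
    apply Rnot_le_lt in h. assert ((D - 4) * b' <= (D - 4) * 1) by (apply Rmult_le_compat_l; lra). lra. }
  assert (He : 2 <= exp 1) by (pose proof (exp_ineq1_le 1); lra).
  assert (HqM0 : 0 < qM) by (pose proof (exp_pos (exp 1)); lra).
  assert (HlnqM : exp 1 <= ln qM) by (rewrite <- (ln_exp (exp 1)); apply ln_le; [apply exp_pos|auto]).
  assert (HRp : 0 < Rpower qM b') by (unfold Rpower; apply exp_pos).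
  set (L := ln H).
  assert (HL : L = ln Cd + b' * ln qM) by (unfold L, H; rewrite ln_mult, ln_Rpower by lra; ring).
  assert (HlnCd : 0 <= ln Cd) by (rewrite <- ln_1; apply ln_le; lra).
  assert (HLq : ln qM <= L) by (rewrite HL; nra).
  assert (HLe : exp 1 <= L) by lra.
  assert (HL0 : 0 < L) by lra.
  assert (HlnL : 1 <= ln L) by (rewrite <- (ln_exp 1); apply ln_le; [apply exp_pos|auto]).
  set (delta := 10 * D ^ 2 / ln L).
  assert (Hdel0 : 0 <= delta) by (unfold delta; apply Rmult_le_pos; [nra|left; apply Rinv_0_lt_compat; lra]).
  assert (Hdel1 : delta <= 10 * D ^ 2).
  { unfold delta. apply (Rmult_le_reg_r (ln L)); [lra|].
    replace (10 * D ^ 2 / ln L * ln L) with (10 * D ^ 2) by (field; lra). nra. }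
  assert (HlnP : ln P = (1 + delta) * L) by (unfold P; rewrite ln_exp; reflexivity).
  assert (HP0 : 0 < P) by (unfold P; apply exp_pos).
  assert (HlnPL : L <= ln P) by (rewrite HlnP; nra).
  split; [|split].
  2:{ apply ln_le_inv'; lra. }
  2:{ lra. }
  set (l := ln P) in *.
  assert (Hl0 : 0 < l) by lra.
  assert (HlnL2 : ln L * ln L <= 4 * L).
  { pose proof (ln_y_half L HL0). pose proof (sqrt_sqrt L (Rlt_le _ _ HL0)).
    pose proof (sqrt_pos L). nra. }
  assert (Hdl : (D - 2) * ln L <= delta * L).
  { unfold delta. apply (Rmult_le_reg_r (ln L)); [lra|].
    replace (10 * D ^ 2 / ln L * L * ln L) with (10 * D ^ 2 * L) by (field; lra).
    assert (h1 : (D - 2) * (ln L * ln L) <= (D - 2) * (4 * L)) by (apply Rmult_le_compat_l; lra).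
    assert (h2 : 4 * (D - 2) <= 10 * D ^ 2) by nra.
    assert (h3 : 4 * (D - 2) * L <= 10 * D ^ 2 * L) by (apply Rmult_le_compat_r; lra).
    replace ((D - 2) * ln L * ln L) with ((D - 2) * (ln L * ln L)) by ring.
    replace ((D - 2) * (4 * L)) with (4 * (D - 2) * L) in h1 by ring. lra. }
  assert (Hlnl : ln l <= ln (1 + 10 * D ^ 2) + ln L).
  { rewrite <- ln_mult by nra. apply ln_le; [lra|]. rewrite HlnP. nra. }
  apply ln_le_inv'.
  - apply Rmult_lt_0_compat; apply pow_lt; lra.
  - apply Rmult_lt_0_compat; apply pow_lt; [nra|lra].
  - rewrite !ln_mult by (apply pow_lt; nra).
    rewrite !ln_pow by nra.
    rewrite !mult_INR, !minus_INR by lia. fold D. simpl (INR 2). simpl (INR 5). simpl (INR 4).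
    assert (Hkey : (2 * D - 5) * ln qM <= 2 * (D - 4) * L).
    { rewrite HL. assert ((2 * D - 5) <= 2 * ((D - 4) * b')) by lra. nra. }
    assert (0 <= ln (1 + 10 * D ^ 2)) by (rewrite <- ln_1; apply ln_le; nra).
    assert (A1 : (D - 2) * ln l <= (D - 2) * (ln (1 + 10 * D ^ 2) + ln L)) by (apply Rmult_le_compat_l; lra).
    assert (A2 : delta * L <= (D - 4) * (delta * L)).
    { assert (0 <= delta * L) by (apply Rmult_le_pos; lra).
      assert (0 <= (D - 5) * (delta * L)) by (apply Rmult_le_pos; lra). lra. }
    assert (HlnP' : l = (1 + delta) * L) by exact HlnP.
    rewrite ?mult_INR. fold D. simpl (INR 2). change (ln P) with l. replace ((1 + 1) * (D - (1 + 1 + 1 + 1)) * l) with ((1 + 1) * (D - (1 + 1 + 1 + 1)) * ((1 + delta) * L)) by (rewrite <- HlnP'; reflexivity). lra.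
Qed.


Lemma fst_sum_n (f : nat -> C) (N : nat) : fst (sum_n f N) = sum_f_R0 (fun m => fst (f m)) N.
Proof.
  induction N as [|N IH]; [rewrite sum_O; reflexivity|].
  rewrite sum_Sn, tech5, <- IH. reflexivity.
Qed.

Lemma snd_sum_n (f : nat -> C) (N : nat) : snd (sum_n f N) = sum_f_R0 (fun m => snd (f m)) N.
Proof.
  induction N as [|N IH]; [rewrite sum_O; reflexivity|].
  rewrite sum_Sn, tech5, <- IH. reflexivity.
Qed.

Lemma Cmod_Sj (d : nat) (Cd : R) (q : nat -> R) (j : nat) (alpha : R) :
  Cmod (Sj d Cd q j alpha) =
  sqrt (Zf (Ppar d Cd q) (sqrt (Rabs (q j))) (2 * INR d) (q j) (Z.to_nat (up (2 * INR d * Ppar d Cd q))) alpha).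
Proof.
  unfold Cmod, Zf, Sj. cbv zeta. rewrite fst_sum_n, snd_sum_n. f_equal. f_equal; f_equal.
  - apply sum_eq. intros m _. unfold wf.
    destruct Rlt_dec; [destruct Rlt_dec|]; simpl; ring.
  - apply sum_eq. intros m _. unfold wf.
    destruct Rlt_dec; [destruct Rlt_dec|]; simpl; ring.
Qed.

Lemma Zf_nonneg P s D c Mx x : 0 <= Zf P s D c Mx x.
Proof. unfold Zf. apply Rplus_le_le_0_compat; apply pow2_ge_0. Qed.

Lemma continuous_sumf (f : nat -> R -> R) (N : nat) (x : R) :
  (forall i, continuous (f i) x) -> continuous (fun y => sum_f_R0 (fun i => f i y) N) x.
Proof.
  intros H. induction N as [|N IH]; simpl; [apply H|].
  apply (@continuous_plus R_UniformSpace R_AbsRing R_NormedModule (fun y => sum_f_R0 (fun i => f i y) N) (f (S N))); auto.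
Qed.

Lemma Zf_cont P s D c Mx x : continuous (Zf P s D c Mx) x.
Proof.
  apply (continuous_ext (fun y => sum_f_R0 (fun m => sum_f_R0 (fun n => wf P s D m * wf P s D n *
     cos (2 * PI * c * (INR m ^ 2 - INR n ^ 2) * y)) Mx) Mx)).
  { intros y. symmetry. apply Zf_eq. }
  apply continuous_sumf. intros m. apply continuous_sumf. intros n.
  apply (@ex_derive_continuous R_AbsRing R_NormedModule). auto_derive. auto.
Qed.

Lemma Cmod_Sj_cont d Cd q j x : continuous (fun a => Cmod (Sj d Cd q j a)) x.
Proof.
  apply (continuous_ext (fun a => sqrt (Zf (Ppar d Cd q) (sqrt (Rabs (q j))) (2 * INR d) (q j) (Z.to_nat (up (2 * INR d * Ppar d Cd q))) a))).
  { intros; symmetry; apply Cmod_Sj. }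
  apply continuous_sqrt_comp. apply Zf_cont.
Qed.

Lemma absprodS_cont d Cd q x : continuous (absprodS d Cd q) x.
Proof.
  unfold absprodS. generalize (seq 0 d). intros l. induction l as [|j l IH]; simpl.
  - apply continuous_const.
  - apply (@continuous_mult R_UniformSpace R_AbsRing (fun a => Cmod (Sj d Cd q j a))
       (fun a => fold_right Rmult 1 (map (fun j0 => Cmod (Sj d Cd q j0 a)) l))); auto.
    apply Cmod_Sj_cont.
Qed.


Lemma sq_le_inv (x y : R) : 0 <= x -> 0 <= y -> x ^ 2 <= y ^ 2 -> x <= y.
Proof.
  intros Hx Hy H. rewrite <- (sqrt_pow2 x Hx), <- (sqrt_pow2 y Hy). apply sqrt_le_1; auto; apply pow2_ge_0.
Qed.

Lemma fin_arith (k : nat) (Dn P qM l V2 L2 r4 E0 c1 G : R) :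
  0 < P -> 1 <= qM -> 1 <= l -> 0 <= V2 -> V2 <= E0 * P * qM * l ->
  0 <= L2 -> L2 <= c1 * l -> 0 < E0 -> 0 < c1 -> 1 <= G -> 0 < Dn ->
  r4 = sqrt (sqrt qM) ->
  qM ^ (2 * k + 5) * l ^ (2 * k + 6) <= G ^ 2 * P ^ (2 * k + 2) ->
  sqrt V2 ^ (k + 3) * r4 * (3 * Dn * L2) <=
  sqrt (E0 ^ (k + 3) * (9 * Dn ^ 2 * c1 ^ 2)) * G * sqrt qM * P ^ (k + 2) * l.
Proof.
  intros HP HqM Hl HV0 HV HL0 HL HE0 Hc1 HG HDn Hr4 Hboost.
  assert (Hsq : 0 <= sqrt qM) by apply sqrt_pos.
  assert (Hsq2 : sqrt qM ^ 2 = qM) by (rewrite <- Rsqr_pow2; apply Rsqr_sqrt; lra).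
  assert (Hr42 : r4 ^ 2 = sqrt qM) by (rewrite Hr4, <- Rsqr_pow2; apply Rsqr_sqrt; auto).
  assert (Hr4p : 0 <= r4) by (rewrite Hr4; apply sqrt_pos).
  set (A := E0 ^ (k + 3) * (9 * Dn ^ 2 * c1 ^ 2)).
  assert (HA : 0 <= A) by (unfold A; apply Rmult_le_pos; [apply pow_le; lra|nra]).
  assert (HsA : sqrt A ^ 2 = A) by (rewrite <- Rsqr_pow2; apply Rsqr_sqrt; auto).
  apply sq_le_inv.
  - apply Rmult_le_pos; [apply Rmult_le_pos; [apply pow_le, sqrt_pos|auto]|nra].
  - repeat apply Rmult_le_pos; try lra; try apply sqrt_pos; apply pow_le; lra.
  -
    replace ((sqrt V2 ^ (k + 3) * r4 * (3 * Dn * L2)) ^ 2) with (V2 ^ (k + 3) * sqrt qM * (9 * Dn ^ 2 * L2 ^ 2)).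
    2:{ assert (HsV : sqrt V2 ^ 2 = V2) by (rewrite <- Rsqr_pow2; apply Rsqr_sqrt; auto).
        rewrite !Rpow_mult_distr.
        replace ((sqrt V2 ^ (k + 3)) ^ 2) with ((sqrt V2 ^ 2) ^ (k + 3)) by (rewrite <- !pow_mult; f_equal; lia).
        rewrite HsV, Hr42. ring. }
    replace ((sqrt A * G * sqrt qM * P ^ (k + 2) * l) ^ 2) with (A * G ^ 2 * qM * (P ^ (k + 2)) ^ 2 * l ^ 2).
    2:{ rewrite !Rpow_mult_distr. rewrite HsA, Hsq2. ring. }
    assert (H1 : V2 ^ (k + 3) <= (E0 * P * qM * l) ^ (k + 3)) by (apply pow_incr; lra).
    assert (H2 : L2 ^ 2 <= (c1 * l) ^ 2) by (apply pow_incr; lra).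
    set (X := qM ^ (k + 2) * sqrt qM * l ^ (k + 3)).
    set (Y := P ^ (k + 1)).
    assert (HX0 : 0 <= X) by (unfold X; repeat apply Rmult_le_pos; auto; apply pow_le; lra).
    assert (HY0 : 0 <= Y) by (unfold Y; apply pow_le; lra).
    assert (HX2 : X ^ 2 = qM ^ (2 * k + 5) * l ^ (2 * k + 6)).
    { unfold X. rewrite !Rpow_mult_distr, Hsq2. rewrite <- !pow_mult.
      replace ((k + 2) * 2)%nat with (2 * k + 4)%nat by lia. replace ((k + 3) * 2)%nat with (2 * k + 6)%nat by lia.
      replace (2 * k + 5)%nat with (S (2 * k + 4)) by lia. simpl. ring. }
    assert (HY2 : (G * Y) ^ 2 = G ^ 2 * P ^ (2 * k + 2)).
    { unfold Y. rewrite Rpow_mult_distr, <- pow_mult. f_equal. f_equal. lia. }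
    assert (HXY : X <= G * Y) by (apply sq_le_inv; [auto|nra|rewrite HX2, HY2; auto]).
    assert (HXY2 : X <= G ^ 2 * Y) by nra.
    assert (Hfin : (E0 * P * qM * l) ^ (k + 3) * sqrt qM * (9 * Dn ^ 2 * (c1 * l) ^ 2)
                   = A * (X * qM * P ^ (k + 3)) * l ^ 2).
    { unfold A, X. rewrite !Rpow_mult_distr. replace (k + 3)%nat with (S (k + 2)) by lia.
      rewrite <- !tech_pow_Rmult. ring. }
    assert (Hfin2 : A * G ^ 2 * qM * (P ^ (k + 2)) ^ 2 * l ^ 2 = A * (G ^ 2 * Y * qM * P ^ (k + 3)) * l ^ 2).
    { unfold Y. replace (k + 3)%nat with (S (k + 2)) by lia. replace (k + 2)%nat with (S (k + 1)) by lia.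
      rewrite <- !tech_pow_Rmult. ring. }
    apply Rle_trans with ((E0 * P * qM * l) ^ (k + 3) * sqrt qM * (9 * Dn ^ 2 * (c1 * l) ^ 2)).
    + apply Rmult_le_compat; [apply Rmult_le_pos; [apply pow_le; lra|auto]|nra| |].
      * apply Rmult_le_compat_r; auto.
      * apply Rmult_le_compat_l; [nra|auto].
    + rewrite Hfin, Hfin2. apply Rmult_le_compat_r; [apply pow2_ge_0|]. apply Rmult_le_compat_l; auto.
      assert (0 <= qM * P ^ (k + 3)) by (apply Rmult_le_pos; [lra|apply pow_le; lra]).
      replace (X * qM * P ^ (k + 3)) with (X * (qM * P ^ (k + 3))) by ring.
      replace (G ^ 2 * Y * qM * P ^ (k + 3)) with (G ^ 2 * Y * (qM * P ^ (k + 3))) by ring.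
      apply Rmult_le_compat_r; auto.
Qed.


Lemma up_nat (x : R) : 0 <= x -> x < INR (Z.to_nat (up x)) <= x + 1.
Proof.
  intros Hx. destruct (archimed x) as [H1 H2].
  assert (Hz : (0 <= up x)%Z) by (assert (-1 < up x)%Z by (apply lt_IZR; simpl; lra); lia).
  rewrite INR_IZR_INZ, Z2Nat.id by exact Hz. lra.
Qed.

Lemma sqrt_le_self (x : R) : 1 <= x -> sqrt x <= x.
Proof.
  intros Hx. rewrite <- (sqrt_sqrt x) at 2 by lra.
  assert (1 <= sqrt x) by (rewrite <- sqrt_1; apply sqrt_le_1; lra). nra.
Qed.

Lemma weyl_applied (Dn P qM q0 c alpha : R) (Mx : nat) :
  1 <= q0 -> q0 <= Rabs c -> Rabs c <= qM -> qM <= P -> 1 <= Dn -> 2 * Dn * P < INR Mx ->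
  / (8 * Dn * P) * / sqrt qM <= alpha -> alpha <= / (8 * Dn * P) * / sqrt q0 ->
  Rabs c * Zf P (sqrt (Rabs c)) (2 * Dn) c Mx alpha <= Dn * P * qM * (32 + 40 * (1 + ln (4 * Dn * P))).
Proof.
  intros Hq0 Hq0c HcqM HqMP HDn HMx Ha0 Ha1.
  set (s := sqrt (Rabs c)).
  assert (Hs1 : 1 <= s) by (unfold s; rewrite <- sqrt_1; apply sqrt_le_1; lra).
  assert (Hss : s * s = Rabs c) by (unfold s; apply sqrt_sqrt; lra).
  assert (Hc0 : c <> 0) by (intro E; rewrite E, Rabs_R0 in Hq0c; lra).
  assert (HP : 0 < P) by lra.
  assert (HsqM : s <= sqrt qM) by (unfold s; apply sqrt_le_1; lra).
  assert (HsqM1 : sqrt qM <= qM) by (apply sqrt_le_self; lra).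
  assert (Hsq0 : sqrt q0 <= s) by (unfold s; apply sqrt_le_1; lra).
  assert (Hsq01 : 1 <= sqrt q0) by (rewrite <- sqrt_1; apply sqrt_le_1; lra).
  assert (HsP : s <= P) by lra.
  assert (H8 : 0 < 8 * Dn * P) by nra.
  assert (Ha : 0 < alpha).
  { eapply Rlt_le_trans; [|exact Ha0]. apply Rmult_lt_0_compat; apply Rinv_0_lt_compat; [lra|].
    apply sqrt_lt_R0; lra. }
  set (E := P / s).
  assert (HE : 1 <= E) by (unfold E; apply (Rmult_le_reg_r s); [lra|]; unfold Rdiv; rewrite Rmult_assoc, Rinv_l; lra).
  assert (HEs : E * s = P) by (unfold E; field; lra).
  set (L := (2 * Dn - 1) * P / s).
  assert (HL : L = (2 * Dn - 1) * E) by (unfold L, E; field; lra).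
  assert (HL0 : 0 <= L) by (rewrite HL; nra).
  set (th := 2 * alpha * Rabs c).
  assert (Hth : 0 < th) by (unfold th; pose proof (Rabs_pos_lt c Hc0); nra).
  set (Nn := Z.to_nat (up (L + 1))).
  assert (HNn : L + 1 < INR Nn <= L + 2) by (unfold Nn; pose proof (up_nat (L + 1) ltac:(lra)); lra).
  set (K := Z.to_nat (up (th * L))).
  assert (HK : th * L < INR K <= th * L + 1) by (unfold K; apply up_nat; nra).
  assert (HNn1 : (1 <= Nn)%nat) by (apply INR_le; simpl; lra).
  pose proof (weyl_main P s (2 * Dn) c alpha Mx Nn K Hs1 HP ltac:(lra) Ha Hc0 HMx) as W.
  replace ((2 * Dn - 1) * P / s) with L in W by reflexivity. fold th in W.
  specialize (W ltac:(lra) HNn1 ltac:(lra)).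
  unfold Zf.
  assert (HthL : th * L <= s / 2).
  { unfold th. rewrite <- Hss, HL.
    assert (alpha * (8 * Dn * P) * sqrt q0 <= 1).
    { apply (Rmult_le_compat_r (8 * Dn * P * sqrt q0)) in Ha1; [|nra].
      replace (/ (8 * Dn * P) * / sqrt q0 * (8 * Dn * P * sqrt q0)) with 1 in Ha1 by (field; lra). nra. }
    assert (Hap : alpha * (8 * Dn * P) <= 1) by nra.
    rewrite <- HEs in Hap.
    assert (alpha * (8 * Dn * (E * s)) * s <= 1 * s) by (apply Rmult_le_compat_r; lra).
    assert (0 <= alpha * E * (s * s)) by (apply Rmult_le_pos; [apply Rmult_le_pos|]; nra).
    nra. }
  assert (HK1 : INR K + 1 <= 3 * s) by lra.
  assert (HNnB : INR Nn <= 3 * Dn * E) by nra.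
  assert (HNn4 : INR Nn <= 4 * Dn * P) by nra.
  assert (HlnNn : 0 <= ln (INR Nn) <= ln (4 * Dn * P)).
  { split; [rewrite <- ln_1; apply ln_le; [lra|apply (le_INR 1) in HNn1; simpl in HNn1; lra]|].
    apply ln_le; [apply (lt_INR 0); lia|lra]. }
  set (Lam := 1 + ln (4 * Dn * P)).
  assert (HLam : 1 <= Lam) by (unfold Lam; lra).
  assert (Hinvth : s * s * (2 / th) <= 8 * Dn * P * sqrt qM).
  { unfold th. rewrite <- Hss.
    replace (s * s * (2 / (2 * alpha * (s * s)))) with (/ alpha) by (field; split; lra).
    apply (Rmult_le_compat_r (8 * Dn * P * sqrt qM)) in Ha0; [|assert (0 < sqrt qM) by lra; nra].
    replace (/ (8 * Dn * P) * / sqrt qM * (8 * Dn * P * sqrt qM)) with 1 in Ha0 by (field; split; lra).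
    apply (Rmult_le_reg_l alpha); [lra|]. rewrite Rinv_r by lra. lra. }
  eapply Rle_trans; [apply Rmult_le_compat_l; [apply Rabs_pos|exact W]|].
  rewrite <- Hss.
  set (Lm := 1 + ln (INR Nn)) in *.
  assert (HLm : 1 <= Lm <= Lam) by (unfold Lm, Lam; lra).
  assert (T1 : s * s * ((L + 1) + 2 * L) <= 6 * Dn * P * qM).
  { assert (L + 1 <= 2 * Dn * E) by nra. assert (s * s * E <= P * s) by nra. nra. }
  assert (T2 : s * s * (2 * ((INR K + 1) * INR Nn)) <= 18 * Dn * P * qM).
  { assert (0 <= INR K + 1) by (pose proof (pos_INR K); lra).
    assert ((INR K + 1) * INR Nn <= 3 * s * (3 * Dn * E)) by (apply Rmult_le_compat; try lra; apply pos_INR).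
    assert (s * s * s * E <= P * qM) by nra. nra. }
  assert (T3 : s * s * (2 * ((INR K + 1) * (2 * Lm / th))) <= 40 * Lam * Dn * P * qM).
  { assert (Hkk : (INR K + 1) / th <= L + 2 / th).
    { replace (L + 2 / th) with ((th * L + 2) / th) by (field; lra).
      unfold Rdiv. apply Rmult_le_compat_r; [left; apply Rinv_0_lt_compat; lra|lra]. }
    replace (s * s * (2 * ((INR K + 1) * (2 * Lm / th)))) with (4 * Lm * (s * s * ((INR K + 1) / th))) by (field; lra).
    assert (s * s * ((INR K + 1) / th) <= s * s * L + s * s * (2 / th)) by nra.
    assert (s * s * L <= 2 * Dn * P * qM) by nra.
    assert (s * s * ((INR K + 1) / th) <= 10 * Dn * P * qM) by nra.
    assert (0 <= s * s * ((INR K + 1) / th)).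
    { apply Rmult_le_pos; [nra|]. apply Rmult_le_pos; [pose proof (pos_INR K); lra|left; apply Rinv_0_lt_compat; lra]. }
    assert (0 < Dn * P * qM) by nra.
    set (X := s * s * ((INR K + 1) / th)) in *.
    assert (Lm * X <= Lam * (10 * Dn * P * qM)) by (apply Rmult_le_compat; lra).
    lra. }
  replace (s * s * (L + 1 + 2 * (L + (INR K + 1) * (2 * Lm / th + INR Nn))))
    with (s * s * ((L + 1) + 2 * L) + s * s * (2 * ((INR K + 1) * INR Nn)) + s * s * (2 * ((INR K + 1) * (2 * Lm / th)))) by ring.
  apply Rle_trans with (6 * Dn * P * qM + 18 * Dn * P * qM + 40 * Lam * Dn * P * qM).
  { apply Rplus_le_compat; [apply Rplus_le_compat|]; assumption. }
  assert (0 <= Dn * P * qM) by (apply Rmult_le_pos; [apply Rmult_le_pos|]; lra). lra.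
Qed.



Lemma l2_applied (Dn P qM q0 c a0 a1 : R) (Mx : nat) :
  1 <= q0 -> q0 <= Rabs c -> Rabs c <= qM -> qM <= P -> 1 <= Dn -> 0 <= a0 -> a0 <= a1 ->
  a1 = / (8 * Dn * P) * / sqrt q0 ->
  ex_RInt (Zf P (sqrt (Rabs c)) (2 * Dn) c Mx) a0 a1 /\
  Rabs c * RInt (Zf P (sqrt (Rabs c)) (2 * Dn) c Mx) a0 a1 <=
    sqrt (Rabs c) / (2 * sqrt q0) + 2 * Dn * (1 + ln (INR Mx + 1)).
Proof.
  intros Hq0 Hq0c HcqM HqMP HDn Ha0 Ha01 Ha1.
  set (s := sqrt (Rabs c)).
  assert (Hs1 : 1 <= s) by (unfold s; rewrite <- sqrt_1; apply sqrt_le_1; lra).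
  assert (Hss : s * s = Rabs c) by (unfold s; apply sqrt_sqrt; lra).
  assert (HP : 0 < P) by lra.
  assert (Hsq01 : 1 <= sqrt q0) by (rewrite <- sqrt_1; apply sqrt_le_1; lra).
  assert (HsqM : s <= sqrt qM) by (unfold s; apply sqrt_le_1; lra).
  assert (HsqM1 : sqrt qM <= qM) by (apply sqrt_le_self; lra).
  assert (HsP : s <= P) by lra.
  destruct (l2_main P s (2 * Dn) c a0 a1 Mx Hs1 HP ltac:(lra) (eq_sym Hss) Ha01) as [Hex Hb].
  split; [exact Hex|].
  pose proof PI_ge3 as Hpi.
  set (L := (2 * Dn - 1) * P / s) in *.
  set (E := P / s).
  assert (HE : 1 <= E) by (unfold E; apply (Rmult_le_reg_r s); [lra|]; unfold Rdiv; rewrite Rmult_assoc, Rinv_l; lra).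
  assert (HEs : E * s = P) by (unfold E; field; lra).
  assert (HL : L = (2 * Dn - 1) * E) by (unfold L, E; field; lra).
  assert (HL1 : L + 1 <= 2 * Dn * E) by nra.
  assert (HL0 : 0 <= L) by (rewrite HL; nra).
  set (Lam := 1 + ln (INR Mx + 1)) in *.
  assert (HLam : 0 <= Lam).
  { unfold Lam. assert (0 <= ln (INR Mx + 1)) by (rewrite <- ln_1; apply ln_le; [lra|pose proof (pos_INR Mx); lra]). lra. }
  rewrite <- Hss.
  assert (Hsq0p : 0 < sqrt q0) by lra.
  assert (A1 : s * s * ((L + 1) * (a1 - a0)) <= s / (2 * sqrt q0)).
  { assert (s * s * (L + 1) <= 2 * Dn * P * s) by (rewrite <- HEs; nra).
    assert (0 <= a1 - a0) by lra. assert (a1 - a0 <= a1) by lra.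
    assert (s * s * (L + 1) * (a1 - a0) <= 2 * Dn * P * s * a1).
    { apply Rmult_le_compat; try lra. apply Rmult_le_pos; nra. }
    assert (2 * Dn * P * s * a1 = s / (4 * sqrt q0)) by (rewrite Ha1; field; repeat split; lra).
    assert (s / (4 * sqrt q0) <= s / (2 * sqrt q0)).
    { unfold Rdiv. apply Rmult_le_compat_l; [lra|]. apply Rinv_le_contravar; lra. }
    nra. }
  assert (A2 : s * s * ((L + 1) * Lam / (PI * P * s)) <= 2 * Dn * Lam).
  { replace (s * s * ((L + 1) * Lam / (PI * P * s))) with ((L + 1) * s / P * Lam / PI) by (field; repeat split; lra).
    assert ((L + 1) * s / P <= 2 * Dn) by (rewrite <- HEs; unfold Rdiv; apply (Rmult_le_reg_r (E * s)); [nra|];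
       rewrite Rmult_assoc, Rinv_l by nra; nra).
    assert ((L + 1) * s / P * Lam <= 2 * Dn * Lam) by (apply Rmult_le_compat_r; lra).
    assert (0 <= (L + 1) * s / P * Lam) by (apply Rmult_le_pos; [apply Rmult_le_pos; [nra|left; apply Rinv_0_lt_compat; lra]|lra]).
    apply Rle_trans with ((L + 1) * s / P * Lam); [|lra].
    assert (HiP : 0 < / PI <= 1) by (split; [apply Rinv_0_lt_compat; lra|rewrite <- Rinv_1; apply Rinv_le_contravar; lra]).
    set (Y := (L + 1) * s / P * Lam) in *. unfold Rdiv. nra. }
  assert (Hss0 : 0 <= s * s) by nra.
  apply (Rmult_le_compat_l (s * s)) in Hb; [|exact Hss0].
  rewrite Rmult_plus_distr_l in Hb. lra.
Qed.


Lemma in_absq (d : nat) (q : nat -> R) (j : nat) : (j < d)%nat -> In (Rabs (q j)) (absq d q).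
Proof. intros H. unfold absq. apply (in_map (fun i => Rabs (q i))). apply in_seq. lia. Qed.

Lemma qmin_attained (d : nat) (q : nat -> R) : (1 <= d)%nat ->
  exists a, (a < d)%nat /\ Rabs (q a) = qmin d q.
Proof.
  intros Hd. unfold qmin. destruct (fold_min_in (Rabs (q 0%nat)) (absq d q)) as [H|H].
  - exists 0%nat. split; [lia|auto].
  - unfold absq in H. apply in_map_iff in H. destruct H as [j [Hj Hin]].
    apply in_seq in Hin. exists j. split; [lia|]. unfold absq. exact Hj.
Qed.

Lemma Qabs_prodn (d : nat) (q : nat -> R) : Qabs d q = prodn (fun j => Rabs (q j)) d.
Proof. unfold Qabs, absq. apply fold_prodn. Qed.

Lemma absprodS_prodn d Cd q x : absprodS d Cd q x = prodn (fun j => Cmod (Sj d Cd q j x)) d.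
Proof. unfold absprodS. apply fold_prodn. Qed.

Lemma amgm (x y r : R) : 0 < r -> x * y <= (r * x ^ 2 + y ^ 2 / r) / 2.
Proof.
  intros Hr. assert (0 <= (r * x - y) ^ 2 / r) by (apply Rmult_le_pos; [apply pow2_ge_0|left; apply Rinv_0_lt_compat; auto]).
  replace ((r * x ^ 2 + y ^ 2 / r) / 2) with (x * y + (r * x - y) ^ 2 / r / 2) by (field; lra). lra.
Qed.

Lemma RInt_lin2 (f g : R -> R) (k1 k2 a b : R) : ex_RInt f a b -> ex_RInt g a b ->
  ex_RInt (fun x => k1 * f x + k2 * g x) a b /\
  RInt (fun x => k1 * f x + k2 * g x) a b = k1 * RInt f a b + k2 * RInt g a b.
Proof.
  intros Hf Hg.
  assert (H1 : ex_RInt (fun x => k1 * f x) a b) by exact (ex_RInt_scal f a b k1 Hf).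
  assert (H2 : ex_RInt (fun x => k2 * g x) a b) by exact (ex_RInt_scal g a b k2 Hg).
  split.
  - exact (ex_RInt_plus (fun x => k1 * f x) (fun x => k2 * g x) a b H1 H2).
  - transitivity (RInt (fun x => k1 * f x) a b + RInt (fun x => k2 * g x) a b).
    + exact (RInt_plus (fun x => k1 * f x) (fun x => k2 * g x) a b H1 H2).
    + rewrite (RInt_scal_R f a b k1 Hf), (RInt_scal_R g a b k2 Hg). reflexivity.
Qed.


Theorem lemma2p6 :
  forall (d : nat), (5 <= d)%nat ->
  forall (Cd : R), 1 <= Cd ->
  exists Cst : R,
  forall q : nat -> R,
    (forall i : nat, (i < d)%nat -> exp (exp 1) <= Rabs (q i)) ->
    (1 <= npos d q)%nat -> (1 <= nneg d q)%nat ->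
    (npos d q + nneg d q)%nat = d ->
    let P := Ppar d Cd q in
    RInt (absprodS d Cd q)
         (/ (8 * INR d * P) * / sqrt (qmax d q))
         (/ (8 * INR d * P) * / sqrt (qmin d q))
    <= Cst * sqrt (qmax d q) * / sqrt (Qabs d q) * P ^ (d - 3) * ln P.
Proof.
  intros d Hd Cd HCd.
  set (Dn := INR d).
  set (c1 := 2 + ln (4 * Dn)).
  set (E0 := 72 * Dn * c1).
  set (G := (1 + 10 * Dn ^ 2) ^ (d - 2)).
  exists (sqrt (E0 ^ (d - 2) * (9 * Dn ^ 2 * c1 ^ 2)) * G).
  intros q Hq Hr Hs Hrs P.
  assert (HDn : 5 <= Dn) by (unfold Dn; replace 5 with (INR 5) by (simpl; lra); apply le_INR; lia).
  assert (Hln4 : 0 <= ln (4 * Dn)) by (rewrite <- ln_1; apply ln_le; lra).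
  assert (Hc1 : 2 <= c1) by (unfold c1; lra).
  assert (HE0 : 0 < E0) by (unfold E0; nra).
  assert (HG : 1 <= G) by (unfold G; apply pow_R1_Rle; nra).
  set (qM := qmax d q) in *. set (q0 := qmin d q) in *.
  assert (HqMj : forall j, (j < d)%nat -> Rabs (q j) <= qM) by (intros j Hj; apply fold_max_ge, in_absq, Hj).
  assert (Hq0j : forall j, (j < d)%nat -> q0 <= Rabs (q j)) by (intros j Hj; apply fold_min_le, in_absq, Hj).
  destruct (qmin_attained d q ltac:(lia)) as [a [Ha Hqa]]. fold q0 in Hqa.
  assert (Hee : 1 <= exp (exp 1)) by (pose proof (exp_ineq1_le (exp 1)); pose proof (exp_pos 1); lra).
  assert (Hq0e : exp (exp 1) <= q0) by (rewrite <- Hqa; apply Hq; auto).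
  assert (HqMe : exp (exp 1) <= qM) by (pose proof (HqMj a Ha); pose proof (Hq0j a Ha); lra).
  assert (Hq01 : 1 <= q0) by lra.
  assert (Hq0M : q0 <= qM) by (pose proof (HqMj a Ha); lra).
  pose proof (beta_ineq (npos d q) (nneg d q) d Hr Hs Hrs Hd) as Hbeta.
  assert (HB : qM ^ (2 * d - 5) * (ln P) ^ (2 * (d - 2)) <= (1 + 10 * INR d ^ 2) ^ (2 * (d - 2)) * P ^ (2 * (d - 4))
               /\ qM <= P /\ 1 <= ln P)
    by exact (boost d Cd qM (beta (npos d q) (nneg d q)) Hd HCd HqMe Hbeta).
  destruct HB as [Hboost [HqMP Hl1]].
  fold Dn in Hboost.
  set (l := ln P) in *.
  assert (HP1 : 1 <= P) by lra.
  assert (HP0 : 0 < P) by lra.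
  assert (Hsq0 : 1 <= sqrt q0) by (rewrite <- sqrt_1; apply sqrt_le_1; lra).
  assert (HsqM : sqrt q0 <= sqrt qM) by (apply sqrt_le_1; lra).
  set (a0 := / (8 * Dn * P) * / sqrt qM).
  set (a1 := / (8 * Dn * P) * / sqrt q0).
  assert (H8 : 0 < / (8 * Dn * P)) by (apply Rinv_0_lt_compat; nra).
  assert (Ha0p : 0 < a0) by (unfold a0; apply Rmult_lt_0_compat; [lra|apply Rinv_0_lt_compat; lra]).
  assert (Ha01 : a0 <= a1) by (unfold a0, a1; apply Rmult_le_compat_l; [lra|apply Rinv_le_contravar; lra]).
  set (b := if (a =? 0)%nat then 1%nat else 0%nat).
  assert (Hb : (b < d)%nat /\ b <> a)
    by (unfold b; destruct (a =? 0)%nat eqn:E; [apply Nat.eqb_eq in E| apply Nat.eqb_neq in E]; lia).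
  set (Mx := Z.to_nat (up (2 * Dn * P))).
  assert (HMx : 2 * Dn * P < INR Mx <= 2 * Dn * P + 1) by (apply up_nat; nra).
  set (Lam1 := 1 + ln (4 * Dn * P)).
  set (V2 := Dn * P * qM * (32 + 40 * Lam1)).
  set (Zj := fun j => Zf P (sqrt (Rabs (q j))) (2 * Dn) (q j) Mx).
  set (Lam2 := 1 + ln (INR Mx + 1)).
  assert (HW : forall j x, (j < d)%nat -> a0 <= x <= a1 -> Rabs (q j) * Zj j x <= V2).
  { intros j x Hj Hx. unfold Zj, V2, Lam1.
    unfold a0, a1 in Hx. apply (weyl_applied Dn P qM q0 (q j) x Mx); auto; lra. }
  destruct (l2_applied Dn P qM q0 (q a) a0 a1 Mx Hq01 (Hq0j a Ha) (HqMj a Ha) HqMP ltac:(lra) ltac:(lra) Ha01 eq_refl)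
    as [Hexa HIa].
  destruct (l2_applied Dn P qM q0 (q b) a0 a1 Mx Hq01 (Hq0j b (proj1 Hb)) (HqMj b (proj1 Hb)) HqMP ltac:(lra) ltac:(lra) Ha01 eq_refl)
    as [Hexb HIb].
  fold (Zj a) in Hexa, HIa. fold (Zj b) in Hexb, HIb. fold Lam2 in HIa, HIb.

  assert (HLam2 : 1 <= Lam2).
  { unfold Lam2. assert (0 <= ln (INR Mx + 1)) by (rewrite <- ln_1; apply ln_le; [lra|pose proof (pos_INR Mx); lra]). lra. }
  assert (HIa' : Rabs (q a) * RInt (Zj a) a0 a1 <= 1 / 2 + 2 * Dn * Lam2).
  { rewrite Hqa in HIa. replace (sqrt q0 / (2 * sqrt q0)) with (1 / 2) in HIa by (field; lra). rewrite Hqa. exact HIa. }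
  assert (HIb' : Rabs (q b) * RInt (Zj b) a0 a1 <= sqrt qM / 2 + 2 * Dn * Lam2).
  { assert (sqrt (Rabs (q b)) <= sqrt qM) by (apply sqrt_le_1; [apply Rabs_pos|lra|apply HqMj, Hb]).
    assert (sqrt (Rabs (q b)) / (2 * sqrt q0) <= sqrt qM / 2).
    { unfold Rdiv. apply Rmult_le_compat; [apply sqrt_pos|left; apply Rinv_0_lt_compat; lra|auto|].
      apply Rinv_le_contravar; lra. }
    lra. }
  set (sqQ := sqrt (Qabs d q)).
  assert (HsqQ : sqQ = prodn (fun j => sqrt (Rabs (q j))) d)
    by (unfold sqQ; rewrite Qabs_prodn; apply prodn_sqrt; intros; apply Rabs_pos).
  assert (HsqQp : 0 < sqQ).
  { rewrite HsqQ. apply prodn_pos. intros j Hj. apply sqrt_lt_R0. pose proof (Hq0j j Hj); lra. }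
  assert (HV2 : 0 < V2).
  { unfold V2, Lam1. assert (0 <= ln (4 * Dn * P)) by (rewrite <- ln_1; apply ln_le; nra).
    assert (0 < Dn * P * qM) by (apply Rmult_lt_0_compat; [nra|lra]). nra. }
  set (V := sqrt V2).
  assert (HV : 0 < V) by (apply sqrt_lt_R0; lra).
  set (r4 := sqrt (sqrt qM)).
  assert (HsqM1 : 1 <= sqrt qM) by lra.
  assert (Hr4 : 1 <= r4) by (unfold r4; rewrite <- sqrt_1; apply sqrt_le_1; lra).
  assert (Hr42 : r4 * r4 = sqrt qM) by (unfold r4; apply sqrt_sqrt; lra).
  set (Cc := V ^ (d - 2) / sqQ / 2).
  assert (HCc : 0 <= Cc) by (unfold Cc; apply Rmult_le_pos; [apply Rmult_le_pos; [apply pow_le; lra|left; apply Rinv_0_lt_compat; lra]|lra]).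
  set (Bnd := fun x => (Cc * r4 * Rabs (q a)) * Zj a x + (Cc / r4 * Rabs (q b)) * Zj b x).
  assert (Hpt : forall x, a0 < x < a1 -> absprodS d Cd q x <= Bnd x).
  { intros x Hx.
    set (t := fun j => Cmod (Sj d Cd q j x) * sqrt (Rabs (q j))).
    assert (Ht : forall j, t j = sqrt (Rabs (q j) * Zj j x)).
    { intros j. unfold t, Zj. rewrite Cmod_Sj. rewrite (sqrt_mult (Rabs (q j))) by (apply Rabs_pos || apply Zf_nonneg).
      rewrite Rmult_comm. reflexivity. }
    assert (Htn : forall j, (j < d)%nat -> 0 <= t j) by (intros; rewrite Ht; apply sqrt_pos).
    assert (HtV : forall j, (j < d)%nat -> j <> a -> j <> b -> t j <= V).
    { intros j Hj _ _. rewrite Ht. unfold V. apply sqrt_le_1.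
      - apply Rmult_le_pos; [apply Rabs_pos|apply Zf_nonneg].
      - lra.
      - apply HW; auto; lra. }
    pose proof (prodn_two t V a b d Ha (proj1 Hb) (not_eq_sym (proj2 Hb)) HV Htn HtV) as H2.
    assert (Hpm : prodn t d = absprodS d Cd q x * sqQ)
      by (unfold t; rewrite prodn_mult, absprodS_prodn, HsqQ; reflexivity).
    assert (Hta : t a ^ 2 = Rabs (q a) * Zj a x).
    { rewrite Ht, <- Rsqr_pow2. apply Rsqr_sqrt. apply Rmult_le_pos; [apply Rabs_pos|apply Zf_nonneg]. }
    assert (Htb : t b ^ 2 = Rabs (q b) * Zj b x).
    { rewrite Ht, <- Rsqr_pow2. apply Rsqr_sqrt. apply Rmult_le_pos; [apply Rabs_pos|apply Zf_nonneg]. }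
    pose proof (amgm (t a) (t b) r4 ltac:(lra)) as Ham.
    apply (Rmult_le_reg_r sqQ); [exact HsqQp|].
    rewrite <- Hpm. eapply Rle_trans; [exact H2|].
    unfold Bnd, Cc.
    replace ((V ^ (d - 2) / sqQ / 2 * r4 * Rabs (q a) * Zj a x + V ^ (d - 2) / sqQ / 2 / r4 * Rabs (q b) * Zj b x) * sqQ)
      with (V ^ (d - 2) * ((r4 * (Rabs (q a) * Zj a x) + (Rabs (q b) * Zj b x) / r4) / 2)) by (field; lra).
    rewrite <- Hta, <- Htb. rewrite Rmult_assoc. apply Rmult_le_compat_l; [apply pow_le; lra|exact Ham]. }
  assert (Hexp : ex_RInt (absprodS d Cd q) a0 a1).
  { apply (@ex_RInt_continuous R_CompleteNormedModule). intros; apply absprodS_cont. }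
  destruct (RInt_lin2 (Zj a) (Zj b) (Cc * r4 * Rabs (q a)) (Cc / r4 * Rabs (q b)) a0 a1 Hexa Hexb) as [HexB HRB].
  fold Bnd in HexB, HRB.
  assert (Hmain1 : RInt (absprodS d Cd q) a0 a1 <= RInt Bnd a0 a1) by (apply RInt_le; auto; intros; apply Hpt; auto).
  rewrite HRB in Hmain1.
  assert (Hmain2 : Cc * r4 * Rabs (q a) * RInt (Zj a) a0 a1 + Cc / r4 * Rabs (q b) * RInt (Zj b) a0 a1
                   <= V ^ (d - 2) * r4 * (3 * Dn * Lam2) / sqQ).
  { replace (Cc * r4 * Rabs (q a) * RInt (Zj a) a0 a1) with (Cc * r4 * (Rabs (q a) * RInt (Zj a) a0 a1)) by ring.
    replace (Cc / r4 * Rabs (q b) * RInt (Zj b) a0 a1) with (Cc / r4 * (Rabs (q b) * RInt (Zj b) a0 a1)) by ring.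
    assert (Hc1r : 0 <= Cc * r4) by nra.
    assert (Hc2r : 0 <= Cc / r4) by (apply Rmult_le_pos; [lra|left; apply Rinv_0_lt_compat; lra]).
    apply Rle_trans with (Cc * r4 * (1 / 2 + 2 * Dn * Lam2) + Cc / r4 * (sqrt qM / 2 + 2 * Dn * Lam2)).
    { apply Rplus_le_compat; apply Rmult_le_compat_l; auto. }
    assert (E1 : Cc / r4 * (sqrt qM / 2) = Cc * r4 / 2) by (rewrite <- Hr42; field; lra).
    assert (E2 : Cc / r4 * (2 * Dn * Lam2) <= Cc * r4 * (2 * Dn * Lam2)).
    { apply Rmult_le_compat_r; [nra|]. unfold Rdiv. apply Rmult_le_compat_l; [lra|].
      apply Rle_trans with 1; [rewrite <- Rinv_1; apply Rinv_le_contravar; lra|lra]. }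
    assert (E3 : Cc * r4 * (1 / 2 + 2 * Dn * Lam2) + Cc * r4 * (1 / 2 + 2 * Dn * Lam2) <= Cc * r4 * (6 * Dn * Lam2)).
    { assert (1 / 2 + 2 * Dn * Lam2 + (1 / 2 + 2 * Dn * Lam2) <= 6 * Dn * Lam2) by nra.
      rewrite <- Rmult_plus_distr_l. apply Rmult_le_compat_l; auto. }
    replace (V ^ (d - 2) * r4 * (3 * Dn * Lam2) / sqQ) with (Cc * r4 * (6 * Dn * Lam2)) by (unfold Cc; field; lra).
    rewrite Rmult_plus_distr_l. rewrite Rmult_plus_distr_l. rewrite E1. lra. }
  assert (Hl1' : 1 <= l) by exact Hl1.
  assert (HL1 : Lam1 <= c1 * l).
  { unfold Lam1, c1. rewrite ln_mult by nra. fold l. assert (0 <= ln (4 * Dn) * (l - 1)) by (apply Rmult_le_pos; lra). nra. }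
  assert (HV2b : V2 <= E0 * P * qM * l).
  { unfold V2, E0. assert (32 + 40 * Lam1 <= 72 * c1 * l) by nra.
    assert (0 <= Dn * P * qM) by (apply Rmult_le_pos; [nra|lra]).
    replace (72 * Dn * c1 * P * qM * l) with (Dn * P * qM * (72 * c1 * l)) by ring.
    apply Rmult_le_compat_l; auto. }
  assert (HL2 : Lam2 <= c1 * l).
  { assert (ln (INR Mx + 1) <= ln (4 * Dn * P)) by (apply ln_le; [pose proof (pos_INR Mx); lra|nra]).
    unfold Lam2. unfold Lam1 in HL1. lra. }
  destruct (Nat.le_exists_sub 5 d Hd) as [k [Hk _]].
  assert (Hb2 : qM ^ (2 * k + 5) * l ^ (2 * k + 6) <= G ^ 2 * P ^ (2 * k + 2)).
  { unfold G. rewrite <- pow_mult.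
    replace (2 * k + 5)%nat with (2 * d - 5)%nat by lia. replace (2 * k + 6)%nat with (2 * (d - 2))%nat by lia.
    replace ((d - 2) * 2)%nat with (2 * (d - 2))%nat by lia. replace (2 * k + 2)%nat with (2 * (d - 4))%nat by lia.
    exact Hboost. }
  assert (Hfin := fin_arith k Dn P qM l V2 Lam2 r4 E0 c1 G HP0 ltac:(lra) Hl1' ltac:(lra) HV2b ltac:(lra) HL2 HE0 ltac:(lra) HG ltac:(lra) eq_refl Hb2).
  fold V in Hfin.
  replace (d - 2)%nat with (k + 3)%nat by lia. replace (d - 3)%nat with (k + 2)%nat by lia.
  replace (d - 2)%nat with (k + 3)%nat in Hmain2 by lia.
  eapply Rle_trans; [exact Hmain1|]. eapply Rle_trans; [exact Hmain2|].
  set (RHS := sqrt (E0 ^ (k + 3) * (9 * Dn ^ 2 * c1 ^ 2)) * G * sqrt qM * P ^ (k + 2) * l) in Hfin.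
  replace (sqrt (E0 ^ (k + 3) * (9 * Dn ^ 2 * c1 ^ 2)) * G * sqrt qM * / sqQ * P ^ (k + 2) * l) with (RHS / sqQ)
    by (unfold RHS; field; lra).
  unfold Rdiv. apply Rmult_le_compat_r; [left; apply Rinv_0_lt_compat; lra|exact Hfin].
Qed.
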